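(* Let $G$ be a group. In $G\mathbf{Cat}$: (i) any composite of Dwyer $G$-maps is a Dwyer $G$-map; (ii) any coproduct of Dwyer $G$-maps is a Dwyer $G$-map; (iii) if $j\colon\mathcal{K}\to\mathcal{L}$ is a Dwyer $G$-map and $f\colon\mathcal{K}\to\mathcal{C}$ is a $G$-functor, then the pushout $k\colon\mathcal{C}\to\mathcal{D}$ of $j$ along $f$ (in $G\mathbf{Cat}$) is a Dwyer $G$-map; (iv) for a sequence of Dwyer $G$-maps $\mathcal{C}_n\to\mathcal{C}_{n+1}$, $n\ge0$, the induced map $\mathcal{C}_0\to\operatorname{colim}_n\mathcal{C}_n$ is a Dwyer $G$-map. The same four statements hold for Dwyer $G$-maps in $G\mathbf{Pos}$.
   Context: A subcategory $\mathcal{S}$ of $\mathcal{C}$ is a sieve if for every morphism $f\colon c\to s$ with $s\in\mathcal{S}$, $c$ and $f$ lie in $\mathcal{S}$; a cosieve if for every $f\colon s\to c$ with $s\in\mathcal{S}$, $c$ and $f$ lie in $\mathcal{S}$. A Dwyer $G$-map is a $G$-functor $k\colon\mathcal{S}\to\mathcal{C}$ between $G$-categories that is the inclusion of a sieve and factors as $\mathcal{S}\xrightarrow{i}\mathcal{T}\xrightarrow{j}\mathcal{C}$ in $G\mathbf{Cat}$, with $j$ the inclusion of a cosieve and $i$ an inclusion with an equivariant right adjoint $r\colon\mathcal{T}\to\mathcal{S}$ whose unit $\mathrm{id}\to r\circ i$ is the identity. $G\mathbf{Pos}$ is the full subcategory of $G$-categories that are posets. *)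

(* Defs.v *)
Set Implicit Arguments.
Unset Strict Implicit.

Record Group := {
  gcar :> Type;
  gmul : gcar -> gcar -> gcar;
  gone : gcar;
  ginv : gcar -> gcar;
  gassoc : forall a b c, gmul a (gmul b c) = gmul (gmul a b) c;
  gone_l : forall a, gmul gone a = a;
  gone_r : forall a, gmul a gone = a;
  ginv_l : forall a, gmul (ginv a) a = gone;
  ginv_r : forall a, gmul a (ginv a) = gone }.

(* comp g f is "g after f", meaningful when cod f = dom g. *)
Record Cat := {
  Ob : Type;
  Mor : Type;
  dom : Mor -> Ob;
  cod : Mor -> Ob;
  idm : Ob -> Mor;
  comp : Mor -> Mor -> Mor;
  dom_idm : forall x, dom (idm x) = x;
  cod_idm : forall x, cod (idm x) = x;
  dom_comp : forall f g, cod f = dom g -> dom (comp g f) = dom f;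
  cod_comp : forall f g, cod f = dom g -> cod (comp g f) = cod g;
  comp_id_l : forall f, comp (idm (cod f)) f = f;
  comp_id_r : forall f, comp f (idm (dom f)) = f;
  comp_assoc : forall f g h, cod f = dom g -> cod g = dom h ->
      comp h (comp g f) = comp (comp h g) f }.

Arguments dom {c} _.
Arguments cod {c} _.
Arguments idm {c} _.
Arguments comp {c} _ _.

Record Functor (C D : Cat) := {
  fob : Ob C -> Ob D;
  fmor : Mor C -> Mor D;
  f_dom : forall m, dom (fmor m) = fob (dom m);
  f_cod : forall m, cod (fmor m) = fob (cod m);
  f_id : forall x, fmor (idm x) = idm (fob x);
  f_comp : forall f g, cod f = dom g -> fmor (comp g f) = comp (fmor g) (fmor f) }.

Arguments fob {C D} _ _.
Arguments fmor {C D} _ _.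

Record GCat (G : Group) := {
  gc :> Cat;
  aob : G -> Ob gc -> Ob gc;
  amor : G -> Mor gc -> Mor gc;
  amor_dom : forall g m, dom (amor g m) = aob g (dom m);
  amor_cod : forall g m, cod (amor g m) = aob g (cod m);
  amor_id : forall g x, amor g (idm x) = idm (aob g x);
  amor_comp : forall g f h, cod f = dom h ->
      amor g (comp h f) = comp (amor g h) (amor g f);
  aob_one : forall x, aob (@gone G) x = x;
  amor_one : forall m, amor (@gone G) m = m;
  aob_mul : forall (g h : G) x, aob (@gmul G g h) x = aob g (aob h x);
  amor_mul : forall (g h : G) m, amor (@gmul G g h) m = amor g (amor h m) }.

Arguments aob {G} _ _ _.
Arguments amor {G} _ _ _.

Record GFunctor (G : Group) (X Y : GCat G) := {
  gf :> Functor X Y;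
  gf_ob : forall g x, fob gf (aob X g x) = aob Y g (fob gf x);
  gf_mor : forall g m, fmor gf (amor X g m) = amor Y g (fmor gf m) }.

Arguments gf {G X Y} _.

Definition compF (C D E : Cat) (F2 : Functor D E) (F1 : Functor C D) : Functor C E.
Proof.
  refine {| fob := fun x => fob F2 (fob F1 x);
            fmor := fun m => fmor F2 (fmor F1 m) |}.
  - intro m. rewrite f_dom, f_dom. reflexivity.
  - intro m. rewrite f_cod, f_cod. reflexivity.
  - intro x. rewrite f_id, f_id. reflexivity.
  - intros f g H. rewrite f_comp by exact H.
    apply f_comp. rewrite f_cod, f_dom, H. reflexivity.
Defined.

Definition compGF (G : Group) (X Y Z : GCat G)
  (F2 : GFunctor Y Z) (F1 : GFunctor X Y) : GFunctor X Z.
Proof.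
  refine {| gf := compF F2 F1 |}.
  - intros g x; simpl. rewrite gf_ob, gf_ob. reflexivity.
  - intros g m; simpl. rewrite gf_mor, gf_mor. reflexivity.
Defined.

Definition FCompEq (C D E : Cat) (v : Functor D E) (u : Functor C D)
  (w : Functor C E) : Prop :=
  (forall x, fob v (fob u x) = fob w x) /\ (forall m, fmor v (fmor u m) = fmor w m).

Definition FEq (C D : Cat) (u v : Functor C D) : Prop :=
  (forall x, fob u x = fob v x) /\ (forall m, fmor u m = fmor v m).

Definition IsInclusion (C D : Cat) (k : Functor C D) : Prop :=
  (forall x y, fob k x = fob k y -> x = y) /\
  (forall f g, fmor k f = fmor k g -> f = g).

Definition IsSieveInclusion (C D : Cat) (k : Functor C D) : Prop :=
  IsInclusion k /\
  (forall (s : Ob C) (f : Mor D), cod f = fob k s -> exists f', fmor k f' = f).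

Definition IsCosieveInclusion (C D : Cat) (k : Functor C D) : Prop :=
  IsInclusion k /\
  (forall (s : Ob C) (f : Mor D), dom f = fob k s -> exists f', fmor k f' = f).

(* r : T -> S is right adjoint to i : S -> T with unit id -> r o i equal to
   the identity: r o i = id_S, and a counit eps : i o r -> id_T (natural)
   satisfying the triangle identities (which, the unit being the identity,
   read eps_{i s} = id and r(eps_t) = id). *)
Definition IsRightAdjointIdUnit (S T : Cat) (i : Functor S T) (r : Functor T S)
  : Prop :=
  (forall s, fob r (fob i s) = s) /\
  (forall m, fmor r (fmor i m) = m) /\
  exists eps : Ob T -> Mor T,
    (forall t, dom (eps t) = fob i (fob r t)) /\
    (forall t, cod (eps t) = t) /\
    (forall f : Mor T, comp f (eps (dom f)) = comp (eps (cod f)) (fmor i (fmor r f))) /\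
    (forall s, eps (fob i s) = idm (fob i s)) /\
    (forall t, fmor r (eps t) = idm (fob r t)).

Definition IsDwyer (G : Group) (S C : GCat G) (k : GFunctor S C) : Prop :=
  IsSieveInclusion k /\
  exists (T : GCat G) (i : GFunctor S T) (j : GFunctor T C) (r : GFunctor T S),
    FCompEq j i k /\ IsCosieveInclusion j /\ IsInclusion i /\
    IsRightAdjointIdUnit i r.

Definition IsPoset (C : Cat) : Prop :=
  (forall f g : Mor C, dom f = dom g -> cod f = cod g -> f = g) /\
  (forall f g : Mor C, dom f = cod g -> cod f = dom g -> dom f = cod f).

Definition inGCat (G : Group) (X : GCat G) : Prop := True.
Definition inGPos (G : Group) (X : GCat G) : Prop := IsPoset X.

Section Univ.
Variable G : Group.
Variable P : GCat G -> Prop.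

Definition IsPushout (K L C D : GCat G) (j : GFunctor K L) (f : GFunctor K C)
  (k : GFunctor C D) (h : GFunctor L D) : Prop :=
  P D /\
  (forall x, fob k (fob f x) = fob h (fob j x)) /\
  (forall m, fmor k (fmor f m) = fmor h (fmor j m)) /\
  (forall (X : GCat G), P X -> forall (a : GFunctor C X) (b : GFunctor L X),
     (forall x, fob a (fob f x) = fob b (fob j x)) ->
     (forall m, fmor a (fmor f m) = fmor b (fmor j m)) ->
     (exists u : GFunctor D X, FCompEq u k a /\ FCompEq u h b) /\
     (forall u u' : GFunctor D X, FCompEq u k a -> FCompEq u h b ->
        FCompEq u' k a -> FCompEq u' h b -> FEq u u')).

Definition IsCoproduct (I : Type) (S : I -> GCat G) (Q : GCat G)
  (iota : forall i, GFunctor (S i) Q) : Prop :=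
  P Q /\
  (forall (X : GCat G), P X -> forall (a : forall i, GFunctor (S i) X),
     (exists u : GFunctor Q X, forall i, FCompEq u (iota i) (a i)) /\
     (forall u u' : GFunctor Q X, (forall i, FCompEq u (iota i) (a i)) ->
        (forall i, FCompEq u' (iota i) (a i)) -> FEq u u')).

Definition IsSeqColim (C : nat -> GCat G) (k : forall n, GFunctor (C n) (C (S n)))
  (L : GCat G) (lam : forall n, GFunctor (C n) L) : Prop :=
  P L /\
  (forall n, FCompEq (lam (S n)) (k n) (lam n)) /\
  (forall (X : GCat G), P X -> forall (a : forall n, GFunctor (C n) X),
     (forall n, FCompEq (a (S n)) (k n) (a n)) ->
     (exists u : GFunctor L X, forall n, FCompEq u (lam n) (a n)) /\
     (forall u u' : GFunctor L X, (forall n, FCompEq u (lam n) (a n)) ->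
        (forall n, FCompEq u' (lam n) (a n)) -> FEq u u')).

Definition DwyerCompositeClosed : Prop :=
  forall (A B C : GCat G) (k1 : GFunctor A B) (k2 : GFunctor B C),
    P A -> P B -> P C -> IsDwyer k1 -> IsDwyer k2 -> IsDwyer (compGF k2 k1).

Definition DwyerCoproductClosed : Prop :=
  forall (I : Type) (S C : I -> GCat G) (k : forall i, GFunctor (S i) (C i)),
    (forall i, P (S i)) -> (forall i, P (C i)) -> (forall i, IsDwyer (k i)) ->
    forall (QS QC : GCat G) (iS : forall i, GFunctor (S i) QS)
           (iC : forall i, GFunctor (C i) QC),
    @IsCoproduct I S QS iS -> @IsCoproduct I C QC iC ->
    forall kappa : GFunctor QS QC,
      (forall i, FCompEq kappa (iS i) (compGF (iC i) (k i))) ->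
      IsDwyer kappa.

Definition DwyerPushoutClosed : Prop :=
  forall (K L C D : GCat G) (j : GFunctor K L) (f : GFunctor K C)
         (k : GFunctor C D) (h : GFunctor L D),
    P K -> P L -> P C -> IsDwyer j -> IsPushout j f k h -> IsDwyer k.

Definition DwyerSeqColimClosed : Prop :=
  forall (C : nat -> GCat G) (k : forall n, GFunctor (C n) (C (S n))),
    (forall n, P (C n)) -> (forall n, IsDwyer (k n)) ->
    forall (L : GCat G) (lam : forall n, GFunctor (C n) L),
      IsSeqColim k lam -> IsDwyer (lam 0).

Definition DwyerClosureProps : Prop :=
  DwyerCompositeClosed /\ DwyerCoproductClosed /\ DwyerPushoutClosed /\
  DwyerSeqColimClosed.

End Univ.

(* Main.v *)
Require Import Defs.
From Stdlib Require Import ProofIrrelevance ClassicalEpsilon.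
Set Implicit Arguments.
Unset Strict Implicit.


Lemma cid_l (C : Cat) (f : Mor C) x : cod f = x -> comp (idm x) f = f.
Proof. intros <-. apply comp_id_l. Qed.
Lemma cid_r (C : Cat) (f : Mor C) x : dom f = x -> comp f (idm x) = f.
Proof. intros <-. apply comp_id_r. Qed.

Section XCat.
Variables (G : Group) (S C : GCat G) (k : GFunctor S C).

Definition XOk (b : Ob C) (t : option (Ob S * Mor C)) (z : bool) : Prop :=
  match t with
  | None => z = false
  | Some (s, m) => dom m = fob k s /\ cod m = b /\ (z = true -> m = idm (fob k s))
  end.

Record XOb := { xb : Ob C; xt : option (Ob S * Mor C); xz : bool; xok : XOk xb xt xz }.

Definition XMOk (x y : XOb) (mu : Mor C) (go : option (Mor S)) : Prop :=
  dom mu = xb x /\ cod mu = xb y /\ (xz y = true -> xz x = true) /\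
  match xt x, xt y, go with
  | None, _, None => True
  | Some (s, m), Some (s', m'), Some g => dom g = s /\ cod g = s' /\
       comp m' (fmor k g) = comp mu m
  | _, _, _ => False
  end.

Record XMor := { xs : XOb; xd : XOb; xmu : Mor C; xg : option (Mor S);
                 xmok : XMOk xs xd xmu xg }.

Lemma XOb_eq (x y : XOb) : xb x = xb y -> xt x = xt y -> xz x = xz y -> x = y.
Proof. destruct x, y; simpl; intros; subst; f_equal; apply proof_irrelevance. Qed.

Lemma XMor_eq (x y : XMor) : xs x = xs y -> xd x = xd y -> xmu x = xmu y ->
  xg x = xg y -> x = y.
Proof. destruct x, y; simpl; intros; subst; f_equal; apply proof_irrelevance. Qed.

Lemma XOk_untied (x : XOb) : xt x = None -> xz x = false.
Proof. destruct x as [b t z H]; simpl; intros ->; exact H. Qed.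

Lemma XOk_tied (x : XOb) s m : xt x = Some (s, m) ->
  dom m = fob k s /\ cod m = xb x /\ (xz x = true -> m = idm (fob k s)).
Proof. destruct x as [b t z H]; simpl; intros ->; exact H. Qed.

Definition idXg (x : XOb) : option (Mor S) := option_map (fun p => idm (fst p)) (xt x).

Lemma idX_ok (x : XOb) : XMOk x x (idm (xb x)) (idXg x).
Proof.
  unfold XMOk, idXg. rewrite dom_idm, cod_idm. split; [|split]; auto. split; auto.
  destruct (xt x) as [[s m]|] eqn:E; simpl; auto.
  destruct (XOk_tied E) as (H1 & H2 & _).
  rewrite dom_idm, cod_idm, f_id. split; auto. split; auto.
  rewrite <- H1, comp_id_r. rewrite <- H2, comp_id_l. reflexivity.
Qed.

Definition idX (x : XOb) : XMor := Build_XMor (idX_ok x).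

Definition ocomp (g f : option (Mor S)) : option (Mor S) :=
  match g, f with Some a, Some b => Some (comp a b) | _, _ => None end.

Lemma compX_ok (f g : XMor) : xd f = xs g ->
  XMOk (xs f) (xd g) (comp (xmu g) (xmu f)) (ocomp (xg g) (xg f)).
Proof.
  intros E.
  destruct f as [x y mu go Hf], g as [y' w nu ho Hg]; simpl in *. subst y'.
  destruct Hf as (Hf1 & Hf2 & Hf3 & Hf4). destruct Hg as (Hg1 & Hg2 & Hg3 & Hg4).
  assert (Hc : cod mu = dom nu) by congruence.
  unfold XMOk. rewrite dom_comp, cod_comp by exact Hc.
  split; auto. split; auto. split; auto.
  destruct (xt x) as [[s m]|] eqn:Ex, (xt y) as [[s' m']|] eqn:Ey,
           (xt w) as [[s'' m'']|] eqn:Ew, go as [a|], ho as [b|]; simpl in *;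
    try contradiction; auto.
  destruct Hf4 as (Ha1 & Ha2 & Ha3), Hg4 as (Hb1 & Hb2 & Hb3).
  destruct (XOk_tied Ex) as (Hm1 & Hm2 & _).
  destruct (XOk_tied Ey) as (Hm1' & Hm2' & _).
  destruct (XOk_tied Ew) as (Hm1'' & Hm2'' & _).
  assert (Hab : cod a = dom b) by congruence.
  rewrite dom_comp, cod_comp by exact Hab. split; auto. split; auto.
  rewrite f_comp by exact Hab.
  rewrite comp_assoc; [| rewrite f_cod, f_dom; congruence | rewrite f_cod; congruence].
  rewrite Hb3.
  rewrite <- comp_assoc; [| rewrite f_cod; congruence | congruence ].
  rewrite Ha3.
  rewrite comp_assoc; [reflexivity | congruence | congruence].
Qed.

Definition compX (g f : XMor) : XMor :=
  match excluded_middle_informative (xd f = xs g) with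
  | left E => Build_XMor (compX_ok E)
  | right _ => f
  end.

Lemma compX_spec (g f : XMor) : xd f = xs g ->
  xs (compX g f) = xs f /\ xd (compX g f) = xd g /\
  xmu (compX g f) = comp (xmu g) (xmu f) /\ xg (compX g f) = ocomp (xg g) (xg f).
Proof.
  intro E. unfold compX. destruct (excluded_middle_informative _); [|contradiction].
  simpl; auto.
Qed.

Lemma XMOk_of (f : XMor) : XMOk (xs f) (xd f) (xmu f) (xg f).
Proof. exact (xmok f). Qed.

Definition XCat : Cat.
Proof.
  refine {| Ob := XOb; Mor := XMor; dom := xs; cod := xd; idm := idX; comp := compX |}.
  - reflexivity.
  - reflexivity.
  - intros f g E. apply (compX_spec E).
  - intros f g E. apply (compX_spec E).
  - intro f. destruct (compX_spec (f:=f) (g:=idX (xd f)) eq_refl) as (A1 & A2 & A3 & A4).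
    apply XMor_eq; auto. rewrite A3; simpl. apply cid_l. apply (xmok f).
    rewrite A4. simpl. unfold idXg.
    pose proof (xmok f) as (_ & _ & _ & H).
    destruct (xt (xs f)) as [[s m]|], (xt (xd f)) as [[s' m']|], (xg f) as [a|];
      simpl in *; try contradiction; auto.
    f_equal. apply cid_l. apply H.
  - intro f. destruct (compX_spec (f:=idX (xs f)) (g:=f) eq_refl) as (A1 & A2 & A3 & A4).
    apply XMor_eq; auto. rewrite A3; simpl. apply cid_r. apply (xmok f).
    rewrite A4. simpl. unfold idXg.
    pose proof (xmok f) as (_ & _ & _ & H).
    destruct (xt (xs f)) as [[s m]|], (xt (xd f)) as [[s' m']|], (xg f) as [a|];
      simpl in *; try contradiction; auto.
    f_equal. apply cid_r. apply H.
  - intros f g h E1 E2.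
    destruct (compX_spec E1) as (A1 & A2 & A3 & A4).
    destruct (compX_spec E2) as (B1 & B2 & B3 & B4).
    assert (E3 : xd (compX g f) = xs h) by congruence.
    assert (E4 : xd f = xs (compX h g)) by congruence.
    destruct (compX_spec E3) as (C1 & C2 & C3 & C4).
    destruct (compX_spec E4) as (D1 & D2 & D3 & D4).
    pose proof (xmok f) as (F1 & F2 & _ & F4).
    pose proof (xmok g) as (G1 & G2 & _ & G4).
    pose proof (xmok h) as (H1 & H2 & _ & H4).
    apply XMor_eq; try congruence.
    + rewrite C3, D3, A3, B3. apply comp_assoc; congruence.
    + rewrite C4, D4, A4, B4. rewrite E1 in F4. rewrite E2 in G4.
      destruct (xt (xs f)) as [[s m]|], (xt (xs g)) as [[s' m']|],
        (xt (xs h)) as [[s'' m'']|], (xt (xd h)) as [[s3 m3]|],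
        (xg f) as [a|], (xg g) as [b|], (xg h) as [c|];
        simpl in *; try contradiction; auto.
      f_equal. apply comp_assoc; intuition congruence.
Defined.

End XCat.


Section XG.
Variables (G : Group) (S C : GCat G) (k : GFunctor S C).

Definition actT (g : G) (t : option (Ob S * Mor C)) :=
  option_map (fun p => (aob S g (fst p), amor C g (snd p))) t.

Lemma actO_ok (g : G) (x : XOb k) : XOk k (aob C g (xb x)) (actT g (xt x)) (xz x).
Proof.
  unfold XOk, actT. destruct (xt x) as [[s m]|] eqn:E; simpl.
  - destruct (XOk_tied E) as (H1 & H2 & H3).
    rewrite amor_dom, amor_cod, H1, H2, <- gf_ob. split; auto. split; auto.
    intro Hz. rewrite H3 by exact Hz. rewrite amor_id, <- gf_ob. reflexivity.
  - apply XOk_untied; auto.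
Qed.

Definition actO (g : G) (x : XOb k) : XOb k := Build_XOb (actO_ok g x).

Lemma actM_ok (g : G) (f : XMor k) :
  XMOk (actO g (xs f)) (actO g (xd f)) (amor C g (xmu f)) (option_map (amor S g) (xg f)).
Proof.
  pose proof (xmok f) as (F1 & F2 & F3 & F4).
  unfold XMOk; simpl. rewrite amor_dom, amor_cod, F1, F2. split; auto. split; auto.
  split; auto. unfold actT.
  destruct (xt (xs f)) as [[s m]|] eqn:E1, (xt (xd f)) as [[s' m']|] eqn:E2,
    (xg f) as [a|]; simpl in *; try contradiction; auto.
  destruct F4 as (A1 & A2 & A3).
  destruct (XOk_tied E2) as (H1 & H2 & _).
  rewrite amor_dom, amor_cod, A1, A2. split; auto. split; auto.
  rewrite gf_mor. rewrite <- amor_comp by (rewrite f_cod, A2; congruence).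
  rewrite <- amor_comp by (destruct (XOk_tied E1) as (?&?&?); congruence).
  rewrite A3; reflexivity.
Qed.

Definition actM (g : G) (f : XMor k) : XMor k := Build_XMor (actM_ok g f).

Definition XGCat : GCat G.
Proof.
  refine {| gc := XCat k; aob := actO; amor := actM |}.
  - reflexivity.
  - reflexivity.
  - intros g x. apply XMor_eq; simpl; auto. apply amor_id.
    unfold idXg; simpl; unfold actT. destruct (xt x) as [[s m]|]; simpl; auto. rewrite amor_id; auto.
  - intros g f h E. simpl in *.
    change (@comp (XCat k)) with (@compX _ _ _ k) in *.
    destruct (compX_spec E) as (A1 & A2 & A3 & A4).
    assert (E' : xd (actM g f) = xs (actM g h)) by (simpl; congruence).
    destruct (compX_spec E') as (B1 & B2 & B3 & B4).
    pose proof (xmok f) as (F1 & F2 & _ & F4).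
    pose proof (xmok h) as (H1 & H2 & _ & H4).
    apply XMor_eq.
    + rewrite B1. simpl. rewrite A1. reflexivity.
    + rewrite B2. simpl. rewrite A2. reflexivity.
    + rewrite B3. simpl. rewrite A3. apply amor_comp. congruence.
    + rewrite B4. simpl. rewrite A4. rewrite E in F4.
      destruct (xt (xs f)) as [[s m]|], (xt (xs h)) as [[s' m']|],
        (xt (xd h)) as [[s'' m'']|], (xg f) as [a|], (xg h) as [b|];
        simpl in *; try contradiction; auto.
      f_equal. apply amor_comp. intuition congruence.
  - intro x. apply XOb_eq; simpl. apply aob_one. unfold actT.
    destruct (xt x) as [[s m]|]; simpl; auto. rewrite aob_one, amor_one; auto. auto.
  - intro f. apply XMor_eq; simpl.
    + apply XOb_eq; simpl. apply aob_one. unfold actT.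
      destruct (xt (xs f)) as [[s m]|]; simpl; auto. rewrite aob_one, amor_one; auto. auto.
    + apply XOb_eq; simpl. apply aob_one. unfold actT.
      destruct (xt (xd f)) as [[s m]|]; simpl; auto. rewrite aob_one, amor_one; auto. auto.
    + apply amor_one.
    + destruct (xg f); simpl; auto. rewrite amor_one; auto.
  - intros g h x. apply XOb_eq; simpl. apply aob_mul. unfold actT.
    destruct (xt x) as [[s m]|]; simpl; auto. rewrite aob_mul, amor_mul; auto. auto.
  - intros g h f. apply XMor_eq; simpl.
    + apply XOb_eq; simpl. apply aob_mul. unfold actT.
      destruct (xt (xs f)) as [[s m]|]; simpl; auto. rewrite aob_mul, amor_mul; auto. auto.
    + apply XOb_eq; simpl. apply aob_mul. unfold actT.
      destruct (xt (xd f)) as [[s m]|]; simpl; auto. rewrite aob_mul, amor_mul; auto. auto.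
    + apply amor_mul.
    + destruct (xg f); simpl; auto. rewrite amor_mul; auto.
Defined.

Definition piF : Functor XGCat C.
Proof.
  refine (@Build_Functor XGCat C (fun x : XOb k => xb x) (fun m : XMor k => xmu m) _ _ _ _).
  - intro m. apply (xmok m).
  - intro m. apply (xmok m).
  - intro x. reflexivity.
  - intros f g E. apply (compX_spec E).
Defined.

Definition piG : GFunctor XGCat C.
Proof. refine {| gf := piF |}; reflexivity. Defined.

Lemma tieO_ok (s : Ob S) : XOk k (fob k s) (Some (s, idm (fob k s))) true.
Proof. simpl. rewrite dom_idm, cod_idm. auto. Qed.
Definition tieO (s : Ob S) : XOb k := Build_XOb (tieO_ok s).

Lemma tieM_ok (a : Mor S) : XMOk (tieO (dom a)) (tieO (cod a)) (fmor k a) (Some a).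
Proof.
  unfold XMOk; simpl. rewrite f_dom, f_cod. split; auto. split; auto. split; auto.
  split; auto. split; auto. rewrite cid_l, cid_r; auto. apply f_dom. apply f_cod.
Qed.
Definition tieM (a : Mor S) : XMor k := Build_XMor (tieM_ok a).

Definition tieF : Functor S XGCat.
Proof.
  refine (@Build_Functor S XGCat tieO tieM _ _ _ _).
  - reflexivity.
  - reflexivity.
  - intro x. apply XMor_eq; simpl.
    + apply XOb_eq; simpl; rewrite ?dom_idm; auto.
    + apply XOb_eq; simpl; rewrite ?cod_idm; auto.
    + apply f_id.
    + reflexivity.
  - intros f g E. simpl.
    assert (E' : xd (tieM f) = xs (tieM g)) by (simpl; rewrite E; auto).
    destruct (compX_spec E') as (A1 & A2 & A3 & A4).
    apply XMor_eq.
    + rewrite A1. simpl. rewrite dom_comp by exact E. reflexivity.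
    + rewrite A2. simpl. rewrite cod_comp by exact E. reflexivity.
    + rewrite A3. apply f_comp. exact E.
    + rewrite A4. reflexivity.
Defined.

Definition tieG : GFunctor S XGCat.
Proof.
  refine {| gf := tieF |}.
  - intros g x. apply XOb_eq; simpl. apply gf_ob.
    rewrite gf_ob, amor_id. reflexivity. reflexivity.
  - intros g m. apply XMor_eq; simpl.
    + apply XOb_eq; simpl. rewrite amor_dom; apply gf_ob.
      rewrite amor_dom, gf_ob, amor_id. reflexivity. reflexivity.
    + apply XOb_eq; simpl. rewrite amor_cod; apply gf_ob.
      rewrite amor_cod, gf_ob, amor_id. reflexivity. reflexivity.
    + apply gf_mor.
    + reflexivity.
Defined.

Lemma X_poset : IsPoset S -> IsPoset C -> IsPoset XGCat.
Proof.
  intros [PS1 PS2] [PC1 PC2]. split.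
  - intros f g Hd Hc. simpl in *.
    pose proof (xmok f) as (F1 & F2 & _ & F4).
    pose proof (xmok g) as (G1 & G2 & _ & G4).
    apply XMor_eq; auto.
    + apply PC1; congruence.
    + rewrite Hd, Hc in F4.
      destruct (xt (xs g)) as [[s m]|], (xt (xd g)) as [[s' m']|], (xg f) as [a|],
        (xg g) as [b|]; simpl in *; try contradiction; auto.
      f_equal. apply PS1; intuition congruence.
  - intros f g Hd Hc. simpl in *.
    pose proof (xmok f) as (F1 & F2 & F3 & F4).
    pose proof (xmok g) as (G1 & G2 & G3 & G4).
    rewrite Hd in F1, F3, F4. rewrite Hc in F2, F3, F4.
    assert (Eb : xb (xd g) = xb (xs g)).
    { rewrite <- F1, <- F2. apply (PC2 (xmu f) (xmu g)); congruence. }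
    apply XOb_eq; rewrite ?Hd, ?Hc; auto.
    + destruct (xt (xs g)) as [[s m]|] eqn:E1, (xt (xd g)) as [[s' m']|] eqn:E2,
        (xg f) as [a|], (xg g) as [b|]; simpl in *; try contradiction; auto.
      destruct (XOk_tied E1) as (H1 & H2 & _).
      destruct (XOk_tied E2) as (H1' & H2' & _).
      assert (s' = s). { destruct F4 as (A1&A2&_), G4 as (B1&B2&_).
        rewrite <- A1, <- A2. apply (PS2 a b); congruence. }
      subst s'. f_equal. f_equal. apply PC1; congruence.
    + destruct (xz (xd g)), (xz (xs g)); auto.
      first [apply F3; reflexivity | apply G3; reflexivity | symmetry; apply F3; reflexivity | symmetry; apply G3; reflexivity].
Qed.

End XG.

Ltac fixX := repeat change (XCat ?k) with (gc (XGCat k)) in *.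

Lemma sig_eq' {A : Type} {P : A -> Prop} (x y : sig P) : proj1_sig x = proj1_sig y -> x = y.
Proof. destruct x, y; simpl; intros; subst; f_equal; apply proof_irrelevance. Qed.

Definition idF (C : Cat) : Functor C C.
Proof. refine (@Build_Functor C C (fun x => x) (fun m => m) _ _ _ _); reflexivity. Defined.
Definition idG (G : Group) (X : GCat G) : GFunctor X X.
Proof. refine {| gf := idF X |}; reflexivity. Defined.

Section FS.
Variables (G : Group) (D : GCat G) (Q : Ob D -> Prop).
Hypothesis HQ : forall g d, Q d -> Q (aob D g d).

Definition FSOb := { d : Ob D | Q d }.
Definition FSMor := { m : Mor D | Q (dom m) /\ Q (cod m) }.

Definition FSdom (m : FSMor) : FSOb := exist _ (dom (proj1_sig m)) (proj1 (proj2_sig m)).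
Definition FScod (m : FSMor) : FSOb := exist _ (cod (proj1_sig m)) (proj2 (proj2_sig m)).
Lemma FSid_ok (x : FSOb) : Q (dom (idm (proj1_sig x))) /\ Q (cod (idm (proj1_sig x))).
Proof. rewrite dom_idm, cod_idm. destruct x; simpl; auto. Qed.
Definition FSid (x : FSOb) : FSMor := exist _ _ (FSid_ok x).
Lemma FScomp_ok (g f : FSMor) : cod (proj1_sig f) = dom (proj1_sig g) ->
  Q (dom (comp (proj1_sig g) (proj1_sig f))) /\ Q (cod (comp (proj1_sig g) (proj1_sig f))).
Proof. intro E. rewrite dom_comp, cod_comp by exact E.
  destruct f as [f [F1 F2]], g as [g [G1 G2]]; simpl; auto. Qed.
Definition FScomp (g f : FSMor) : FSMor :=
  match excluded_middle_informative (cod (proj1_sig f) = dom (proj1_sig g)) with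
  | left E => exist _ _ (FScomp_ok E)
  | right _ => f end.
Lemma FScomp_val (g f : FSMor) : cod (proj1_sig f) = dom (proj1_sig g) ->
  proj1_sig (FScomp g f) = comp (proj1_sig g) (proj1_sig f).
Proof. intro E. unfold FScomp. destruct (excluded_middle_informative _); [reflexivity|contradiction]. Qed.

Lemma FScod_eq (f g : FSMor) : FScod f = FSdom g -> cod (proj1_sig f) = dom (proj1_sig g).
Proof. intro E. apply (f_equal (@proj1_sig _ _)) in E. exact E. Qed.

Definition FSCat : Cat.
Proof.
  refine {| Ob := FSOb; Mor := FSMor; dom := FSdom; cod := FScod; idm := FSid; comp := FScomp |}.
  - intro x. apply sig_eq'; simpl. apply dom_idm.
  - intro x. apply sig_eq'; simpl. apply cod_idm.
  - intros f g E. apply sig_eq'; simpl. apply FScod_eq in E. rewrite FScomp_val by exact E.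
    apply dom_comp; exact E.
  - intros f g E. apply sig_eq'; simpl. apply FScod_eq in E. rewrite FScomp_val by exact E.
    apply cod_comp; exact E.
  - intro f. apply sig_eq'. rewrite FScomp_val by (simpl; symmetry; apply dom_idm).
    simpl. apply comp_id_l.
  - intro f. apply sig_eq'. rewrite FScomp_val by (simpl; apply cod_idm).
    simpl. apply comp_id_r.
  - intros f g h E1 E2. apply FScod_eq in E1. apply FScod_eq in E2.
    apply sig_eq'.
    rewrite !FScomp_val; auto.
    + apply comp_assoc; auto.
    + rewrite FScomp_val by auto. rewrite dom_comp; auto.
    + rewrite FScomp_val by auto. rewrite cod_comp; auto.
Defined.

Lemma FSact_ok (g : G) (m : FSMor) : Q (dom (amor D g (proj1_sig m))) /\ Q (cod (amor D g (proj1_sig m))).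
Proof. rewrite amor_dom, amor_cod. destruct m as [m [M1 M2]]; simpl; auto. Qed.

Definition FSGCat : GCat G.
Proof.
  refine {| gc := FSCat;
            aob := fun g (x : FSOb) => exist _ (aob D g (proj1_sig x)) (HQ g (proj2_sig x));
            amor := fun g (m : FSMor) => exist _ (amor D g (proj1_sig m)) (FSact_ok g m) |}.
  - intros; apply sig_eq'; simpl; apply amor_dom.
  - intros; apply sig_eq'; simpl; apply amor_cod.
  - intros; apply sig_eq'; simpl; apply amor_id.
  - intros g f h E. apply sig_eq'. simpl. apply FScod_eq in E.
    rewrite !FScomp_val; auto. apply amor_comp; auto. simpl. rewrite amor_cod, amor_dom. congruence.
  - intros; apply sig_eq'; simpl; apply aob_one.
  - intros; apply sig_eq'; simpl; apply amor_one.
  - intros; apply sig_eq'; simpl; apply aob_mul.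
  - intros; apply sig_eq'; simpl; apply amor_mul.
Defined.

Definition inclF : Functor FSGCat D.
Proof.
  refine (@Build_Functor FSGCat D (fun x : FSOb => proj1_sig x) (fun m : FSMor => proj1_sig m) _ _ _ _).
  - reflexivity.
  - reflexivity.
  - reflexivity.
  - intros f g E. apply FScomp_val. apply FScod_eq. exact E.
Defined.
Definition inclG : GFunctor FSGCat D.
Proof. refine {| gf := inclF |}; reflexivity. Defined.

Lemma inclG_inj : IsInclusion inclG.
Proof. split; intros x y E; apply sig_eq'; exact E. Qed.

Section Corestr.
Variables (A : GCat G) (F : GFunctor A D) (HF : forall a, Q (fob F a)).
Lemma cor_ok (m : Mor A) : Q (dom (fmor F m)) /\ Q (cod (fmor F m)).
Proof. rewrite f_dom, f_cod. auto. Qed.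
Definition corF : Functor A FSGCat.
Proof.
  refine (@Build_Functor A FSGCat (fun a => exist Q (fob F a) (HF a))
             (fun m => exist _ (fmor F m) (cor_ok m)) _ _ _ _).
  - intro m. apply sig_eq'. simpl. apply f_dom.
  - intro m. apply sig_eq'. simpl. apply f_cod.
  - intro x. apply sig_eq'. simpl. apply f_id.
  - intros f g E. apply sig_eq'. simpl. rewrite FScomp_val. apply f_comp; auto.
    simpl. rewrite f_cod, f_dom, E. reflexivity.
Defined.
Definition corG : GFunctor A FSGCat.
Proof.
  refine {| gf := corF |}.
  - intros g x. apply sig_eq'. simpl. apply gf_ob.
  - intros g m. apply sig_eq'. simpl. apply gf_mor.
Defined.
End Corestr.

Lemma FS_poset : IsPoset D -> IsPoset FSGCat.
Proof.
  intros [P1 P2]. split.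
  - intros f g E1 E2. apply sig_eq'. apply (P1 (proj1_sig f) (proj1_sig g)).
    apply (f_equal (@proj1_sig _ _)) in E1; exact E1.
    apply (f_equal (@proj1_sig _ _)) in E2; exact E2.
  - intros f g E1 E2. apply sig_eq'.
    apply (f_equal (@proj1_sig _ _)) in E1. apply (f_equal (@proj1_sig _ _)) in E2.
    simpl in *. apply (P2 (proj1_sig f) (proj1_sig g)); auto.
Qed.

End FS.



Section DS.
Variables (G : Group) (S C : GCat G) (k : GFunctor S C).

Definition P3 (B : GCat G) (A : GFunctor B (XGCat k)) : Prop :=
  forall b s m, xt (fob A b : XOb k) = Some (s, m) ->
    exists mt : Mor B, cod mt = b /\ xmu (fmor A mt : XMor k) = m /\
                      xg (fmor A mt : XMor k) = Some (idm s).

Definition DwyerStr (Psi : GFunctor C (XGCat k)) : Prop :=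
  (forall c, xb (fob Psi c : XOb k) = c) /\ (forall mu, xmu (fmor Psi mu : XMor k) = mu) /\
  (forall s, fob Psi (fob k s) = tieO k s) /\ (forall a, fmor Psi (fmor k a) = tieM k a) /\
  P3 Psi.

Definition tS (x : XOb k) : xt x <> None -> Ob S :=
  match xt x as o return o <> None -> Ob S with
  | Some p => fun _ => fst p | None => fun H => False_rect _ (H eq_refl) end.
Definition tM (x : XOb k) : xt x <> None -> Mor C :=
  match xt x as o return o <> None -> Mor C with
  | Some p => fun _ => snd p | None => fun H => False_rect _ (H eq_refl) end.
Definition gS (f : XMor k) : xg f <> None -> Mor S :=
  match xg f as o return o <> None -> Mor S with
  | Some p => fun _ => p | None => fun H => False_rect _ (H eq_refl) end.

Lemma tS_eq (x : XOb k) H s m : xt x = Some (s, m) -> @tS x H = s.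
Proof. intro E. unfold tS. revert H. rewrite E. reflexivity. Qed.
Lemma tM_eq (x : XOb k) H s m : xt x = Some (s, m) -> @tM x H = m.
Proof. intro E. unfold tM. revert H. rewrite E. reflexivity. Qed.
Lemma gS_eq (f : XMor k) H a : xg f = Some a -> @gS f H = a.
Proof. intro E. unfold gS. revert H. rewrite E. reflexivity. Qed.

Lemma tied_ex (x : XOb k) : xt x <> None -> exists s m, xt x = Some (s, m).
Proof. destruct (xt x) as [[s m]|]; [eauto|]. intro H; exfalso; auto. Qed.

Lemma XM_tied (f : XMor k) : xt (xs f) <> None -> xt (xd f) <> None /\ xg f <> None.
Proof.
  intro H. pose proof (xmok f) as (_ & _ & _ & F).
  destruct (xt (xs f)) as [[s m]|], (xt (xd f)) as [[s' m']|], (xg f);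
    simpl in *; try contradiction; split; discriminate.
Qed.

Lemma XM_sq (f : XMor k) s m s' m' a : xt (xs f) = Some (s, m) -> xt (xd f) = Some (s', m') ->
  xg f = Some a -> dom a = s /\ cod a = s' /\ comp m' (fmor k a) = comp (xmu f) m.
Proof.
  intros E1 E2 E3. pose proof (xmok f) as (_ & _ & _ & F). rewrite E1, E2, E3 in F. exact F.
Qed.

Variable Psi : GFunctor C (XGCat k).
Hypothesis HD : DwyerStr Psi.

Definition QT (c : Ob C) : Prop := xt (fob Psi c : XOb k) <> None.

Lemma QT_act g c : QT c -> QT (aob C g c).
Proof. unfold QT. rewrite gf_ob. simpl. unfold actT. destruct (xt _); simpl; congruence. Qed.

Definition TT : GCat G := FSGCat QT_act.
Definition jT : GFunctor TT C := inclG QT_act.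

Lemma QT_k s : QT (fob k s).
Proof. unfold QT. destruct HD as (_ & _ & H3 & _). rewrite H3. simpl. discriminate. Qed.

Definition iT : GFunctor S TT := corG QT_act (F := k) QT_k.

Lemma Psi_dom (mu : Mor C) : xs (fmor Psi mu : XMor k) = fob Psi (dom mu).
Proof. apply (f_dom Psi). Qed.
Lemma Psi_cod (mu : Mor C) : xd (fmor Psi mu : XMor k) = fob Psi (cod mu).
Proof. apply (f_cod Psi). Qed.

Definition rob (t : Ob TT) : Ob S := tS (proj2_sig t).
Lemma rmor_ok (mu : Mor TT) : xg (fmor Psi (proj1_sig mu) : XMor k) <> None.
Proof. destruct mu as [mu [Q1 Q2]]. simpl. apply XM_tied. rewrite Psi_dom. exact Q1. Qed.
Definition rmor (mu : Mor TT) : Mor S := gS (@rmor_ok mu).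

Lemma rob_eq (t : Ob TT) s m : xt (fob Psi (proj1_sig t) : XOb k) = Some (s, m) -> rob t = s.
Proof. intro E. eapply tS_eq; exact E. Qed.
Lemma rmor_eq (mu : Mor TT) a : xg (fmor Psi (proj1_sig mu) : XMor k) = Some a -> rmor mu = a.
Proof. intro E. apply (gS_eq _ E). Qed.

Lemma rmor_spec (mu : Mor TT) : exists s m s' m',
  xt (fob Psi (dom (proj1_sig mu)) : XOb k) = Some (s, m) /\
  xt (fob Psi (cod (proj1_sig mu)) : XOb k) = Some (s', m') /\
  dom (rmor mu) = s /\ cod (rmor mu) = s' /\
  comp m' (fmor k (rmor mu)) = comp (proj1_sig mu) m.
Proof.
  pose proof (proj1 (proj2_sig mu)) as Q1. pose proof (proj2 (proj2_sig mu)) as Q2.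
  destruct (tied_ex Q1) as (s & m & E1). destruct (tied_ex Q2) as (s' & m' & E2).
  destruct (xg (fmor Psi (proj1_sig mu) : XMor k)) as [a|] eqn:E3; [|exfalso; exact (@rmor_ok mu E3)].
  rewrite <- Psi_dom in E1. rewrite <- Psi_cod in E2.
  destruct (XM_sq E1 E2 E3) as (A1 & A2 & A3).
  rewrite <- Psi_dom. rewrite <- Psi_cod.
  exists s, m, s', m'. rewrite (rmor_eq E3). destruct HD as (_ & H2 & _).
  rewrite H2 in A3. auto.
Qed.

Lemma rob_spec (t : Ob TT) : exists m, xt (fob Psi (proj1_sig t) : XOb k) = Some (rob t, m).
Proof.
  destruct (tied_ex (proj2_sig t)) as (s & m & E). exists m. rewrite (rob_eq E). exact E.
Qed.

Definition rF : Functor TT S.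
Proof.
  refine (@Build_Functor TT S rob rmor _ _ _ _).
  - intro mu. destruct (rmor_spec mu) as (s & m & s' & m' & E1 & _ & A1 & _).
    rewrite A1. symmetry. apply (rob_eq (t := dom mu) E1).
  - intro mu. destruct (rmor_spec mu) as (s & m & s' & m' & _ & E2 & _ & A2 & _).
    rewrite A2. symmetry. apply (rob_eq (t := cod mu) E2).
  - intro x. apply rmor_eq. simpl. rewrite (f_id Psi). simpl. unfold idXg.
    destruct (rob_spec x) as (m & E). fixX. rewrite E. reflexivity.
  - intros f g E. apply rmor_eq.
    assert (E' : cod (proj1_sig f) = dom (proj1_sig g)).
    { apply (f_equal (@proj1_sig _ _)) in E. exact E. }
    simpl. rewrite FScomp_val by exact E'. rewrite (f_comp Psi) by exact E'.
    assert (E2 : xd (fmor Psi (proj1_sig f) : XMor k) = xs (fmor Psi (proj1_sig g) : XMor k)).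
    { rewrite Psi_dom, Psi_cod, E'. reflexivity. }
    destruct (compX_spec E2) as (_ & _ & _ & A4). simpl.
    change (@comp (XCat k)) with (@compX _ _ _ k). fixX. rewrite A4.
    destruct (xg (fmor Psi (proj1_sig f) : XMor k)) as [a|] eqn:Ea;
      [| exfalso; exact (@rmor_ok f Ea)].
    destruct (xg (fmor Psi (proj1_sig g) : XMor k)) as [b|] eqn:Eb;
      [| exfalso; exact (@rmor_ok g Eb)].
    rewrite (rmor_eq Ea), (rmor_eq Eb). reflexivity.
Defined.


Definition rG : GFunctor TT S.
Proof.
  refine {| gf := rF |}.
  - intros g t. simpl. destruct (rob_spec t) as (m & E).
    apply (@rob_eq (aob TT g t) _ (amor C g m)). simpl. rewrite (gf_ob Psi). simpl.
    unfold actT. fixX. rewrite E. reflexivity.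
  - intros g mu. simpl. apply rmor_eq. simpl. rewrite (gf_mor Psi). simpl.
    destruct (xg (fmor Psi (proj1_sig mu) : XMor k)) as [a|] eqn:Ea;
      [| exfalso; exact (@rmor_ok mu Ea)].
    fixX. rewrite Ea. rewrite (rmor_eq Ea). reflexivity.
Defined.

Lemma eps_ok (t : Ob TT) : QT (dom (tM (proj2_sig t))) /\ QT (cod (tM (proj2_sig t))).
Proof.
  destruct (tied_ex (proj2_sig t)) as (s & m & E).
  rewrite (tM_eq _ E). destruct (XOk_tied E) as (H1 & H2 & _).
  rewrite H1, H2. split. apply QT_k.
  destruct HD as (H & _). rewrite H. exact (proj2_sig t).
Qed.
Definition epsT (t : Ob TT) : Mor TT := exist _ _ (eps_ok t).

Lemma ks_inj : IsInclusion k.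
Proof.
  destruct HD as (_ & _ & H3 & H4 & _). split.
  - intros x y E. apply (f_equal (fob Psi)) in E. rewrite !H3 in E.
    apply (f_equal (@xt _ _ _ k)) in E. simpl in E. congruence.
  - intros f g E. apply (f_equal (fmor Psi)) in E. rewrite !H4 in E.
    apply (f_equal (@xg _ _ _ k)) in E. simpl in E. congruence.
Qed.

Lemma ks_sieve : IsSieveInclusion k.
Proof.
  split. apply ks_inj.
  intros s f Ef.
  destruct HD as (H1 & H2 & H3 & H4 & _).
  pose proof (xmok (fmor Psi f : XMor k)) as (F1 & F2 & F3 & F4).
  fixX.
  rewrite Psi_dom in F1, F3, F4. rewrite Psi_cod in F2, F3, F4. rewrite Ef in F2, F3, F4.
  rewrite H3 in F2, F3, F4. simpl in F3, F4.
  specialize (F3 eq_refl).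
  destruct (xt (fob Psi (dom f) : XOb k)) as [[s' m]|] eqn:E1.
  2:{ pose proof (XOk_untied E1) as U. fixX. rewrite U in F3. discriminate. }
  destruct (XOk_tied E1) as (A1 & A2 & A3). specialize (A3 F3).
  fixX. rewrite E1 in F4.
  destruct (xg (fmor Psi f : XMor k)) as [a|] eqn:Ea; [|contradiction].
  destruct F4 as (B1 & B2 & B3).
  exists a. rewrite H2 in B3. rewrite A3 in B3.
  rewrite cid_l in B3 by (rewrite f_cod, B2; reflexivity).
  rewrite cid_r in B3. exact B3.
  rewrite H1 in A2. rewrite <- A2, A3, cod_idm. reflexivity.
Qed.

Theorem DwyerStr_IsDwyer : IsDwyer k.
Proof.
  split. apply ks_sieve.
  exists TT, iT, jT, rG. split; [|split; [|split]].
  - split; intro; reflexivity.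
  - split. apply inclG_inj. intros t f Ef.
    assert (Q2 : QT (cod f)).
    { pose proof (proj2_sig t) as Qt. simpl in Ef. rewrite <- Ef in Qt.
      unfold QT in *. rewrite <- Psi_cod. rewrite <- Psi_dom in Qt.
      apply (XM_tied Qt). }
    assert (Q1 : QT (dom f)) by (simpl in Ef; rewrite Ef; exact (proj2_sig t)).
    exists (exist _ f (conj Q1 Q2)). reflexivity.
  - destruct ks_inj as [I1 I2]. split.
    + intros x y E. apply I1. apply (f_equal (@proj1_sig _ _)) in E. exact E.
    + intros x y E. apply I2. apply (f_equal (@proj1_sig _ _)) in E. exact E.
  - destruct HD as (H1 & H2 & H3 & H4 & H5).
    split; [|split].
    + intro s. simpl. apply (@rob_eq (fob iT s) _ (idm (fob k s))). simpl. fixX. rewrite H3. reflexivity.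
    + intro a. simpl. apply rmor_eq. simpl. fixX. rewrite H4. reflexivity.
    + exists epsT. split; [|split; [|split; [|split]]].
      * intro t. apply sig_eq'. simpl. destruct (rob_spec t) as (m & E).
        rewrite (tM_eq _ E). apply (XOk_tied E).
      * intro t. apply sig_eq'. simpl. destruct (rob_spec t) as (m & E).
        rewrite (tM_eq _ E). destruct (XOk_tied E) as (_ & A & _). rewrite A. apply H1.
      * intro f. apply sig_eq'.
        destruct (rmor_spec f) as (s & m & s' & m' & E1 & E2 & A1 & A2 & A3).
        assert (Ec1 : cod (proj1_sig (epsT (dom f))) = dom (proj1_sig f)).
        { simpl. destruct (tied_ex (proj2_sig (dom f))) as (s0 & m0 & E0).
          rewrite (tM_eq _ E0). destruct (XOk_tied E0) as (_ & A & _). rewrite A. apply H1. }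
        assert (Ec2 : cod (proj1_sig (fmor iT (fmor rG f))) = dom (proj1_sig (epsT (cod f)))).
        { simpl. destruct (tied_ex (proj2_sig (cod f))) as (s0 & m0 & E0).
          rewrite (tM_eq _ E0). destruct (XOk_tied E0) as (A & _ & _). rewrite A.
          rewrite f_cod. f_equal. simpl in E0. fixX. rewrite E2 in E0.
          congruence. }
        simpl. rewrite !FScomp_val by assumption. simpl.
        rewrite (tM_eq _ E1), (tM_eq _ E2). symmetry. exact A3.
      * intro s. apply sig_eq'. simpl. rewrite (@tM_eq _ _ s (idm (fob k s))). reflexivity.
        simpl. fixX. rewrite H3. reflexivity.
      * intro t. simpl. apply rmor_eq. simpl.
        destruct (rob_spec t) as (m & E).
        rewrite (tM_eq _ E).
        destruct (H5 _ _ _ E) as (mt & C1 & C2 & C3).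
        rewrite H2 in C2. subst mt. fixX. exact C3.
Qed.

End DS.



Lemma inv_act_ob (G : Group) (X : GCat G) (g : G) x : aob X (@ginv G g) (aob X g x) = x.
Proof. rewrite <- aob_mul, ginv_l, aob_one. reflexivity. Qed.
Lemma inv_act_mor (G : Group) (X : GCat G) (g : G) x : amor X (@ginv G g) (amor X g x) = x.
Proof. rewrite <- amor_mul, ginv_l, amor_one. reflexivity. Qed.

Section FromD.
Variables (G : Group) (S C T : GCat G) (k : GFunctor S C)
  (i : GFunctor S T) (j : GFunctor T C) (r : GFunctor T S).
Hypotheses (Hk : IsSieveInclusion k) (Hji : FCompEq j i k) (Hj : IsCosieveInclusion j)
  (Hi : IsInclusion i).
Variable eps : Ob T -> Mor T.
Hypotheses (Hri1 : forall s, fob r (fob i s) = s) (Hri2 : forall m, fmor r (fmor i m) = m)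
  (He1 : forall t, dom (eps t) = fob i (fob r t)) (He2 : forall t, cod (eps t) = t)
  (He3 : forall f : Mor T, comp f (eps (dom f)) = comp (eps (cod f)) (fmor i (fmor r f)))
  (He4 : forall s, eps (fob i s) = idm (fob i s))
  (He5 : forall t, fmor r (eps t) = idm (fob r t)).



Lemma eps_uniq (t : Ob T) (x : Mor T) : dom x = fob i (fob r t) -> cod x = t ->
  fmor r x = idm (fob r t) -> x = eps t.
Proof.
  intros D1 D2 D3. pose proof (He3 x) as N. rewrite D1, He4, D2, D3 in N.
  rewrite <- D1 in N at 1. rewrite comp_id_r in N. rewrite N. rewrite f_id.
  apply cid_r. rewrite He1. reflexivity.
Qed.

Lemma eps_equiv (g : G) t : eps (aob T g t) = amor T g (eps t).
Proof.
  symmetry. apply eps_uniq.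
  - rewrite amor_dom, He1, gf_ob, gf_ob. reflexivity.
  - rewrite amor_cod, He2. reflexivity.
  - rewrite gf_mor, He5, amor_id, gf_ob. reflexivity.
Qed.

Definition inT (c : Ob C) : Prop := exists t, fob j t = c.

Definition tOf (c : Ob C) : option (Ob T) :=
  match excluded_middle_informative (inT c) with
  | left H => Some (proj1_sig (constructive_indefinite_description _ H))
  | right _ => None end.

Lemma tOf_some c t : tOf c = Some t -> fob j t = c.
Proof.
  unfold tOf. destruct (excluded_middle_informative _) as [H|H]; [|discriminate].
  intro E. injection E as <-. apply (proj2_sig (constructive_indefinite_description _ H)).
Qed.
Lemma tOf_none c : tOf c = None -> forall t, fob j t <> c.
Proof.
  unfold tOf. destruct (excluded_middle_informative _) as [H|H]; [discriminate|].
  intros _ t E. apply H. exists t; exact E.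
Qed.
Lemma tOf_of c t : fob j t = c -> tOf c = Some t.
Proof.
  intro E. destruct (tOf c) as [t'|] eqn:Et.
  - apply tOf_some in Et. f_equal. apply (proj1 (proj1 Hj)). congruence.
  - exfalso. exact (tOf_none Et E).
Qed.

Definition inM (mu : Mor C) : Prop := exists m, fmor j m = mu.
Definition mOf (mu : Mor C) : option (Mor T) :=
  match excluded_middle_informative (inM mu) with
  | left H => Some (proj1_sig (constructive_indefinite_description _ H))
  | right _ => None end.
Lemma mOf_some c t : mOf c = Some t -> fmor j t = c.
Proof.
  unfold mOf. destruct (excluded_middle_informative _) as [H|H]; [|discriminate].
  intro E. injection E as <-. apply (proj2_sig (constructive_indefinite_description _ H)).
Qed.
Lemma mOf_none c : mOf c = None -> forall t, fmor j t <> c.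
Proof.
  unfold mOf. destruct (excluded_middle_informative _) as [H|H]; [discriminate|].
  intros _ t E. apply H. exists t; exact E.
Qed.
Lemma mOf_of c t : fmor j t = c -> mOf c = Some t.
Proof.
  intro E. destruct (mOf c) as [t'|] eqn:Et.
  - apply mOf_some in Et. f_equal. apply (proj2 (proj1 Hj)). congruence.
  - exfalso. exact (mOf_none Et E).
Qed.

Definition flag (c : Ob C) : bool :=
  if excluded_middle_informative (exists s, fob k s = c) then true else false.

Lemma flag_true c : flag c = true -> exists s, fob k s = c.
Proof. unfold flag. destruct (excluded_middle_informative _); auto. discriminate. Qed.
Lemma flag_of c s : fob k s = c -> flag c = true.
Proof. unfold flag. destruct (excluded_middle_informative _) as [_|H]; auto.
  intro E. exfalso. apply H. eauto. Qed.

Lemma k_eq s : fob k s = fob j (fob i s).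
Proof. symmetry. apply (proj1 Hji). Qed.
Lemma km_eq a : fmor k a = fmor j (fmor i a).
Proof. symmetry. apply (proj2 Hji). Qed.

Definition rawt (c : Ob C) : option (Ob S * Mor C) :=
  match tOf c with Some t => Some (fob r t, fmor j (eps t)) | None => None end.

Lemma PsiO_ok c : XOk k c (rawt c) (flag c).
Proof.
  unfold XOk, rawt. destruct (tOf c) as [t|] eqn:Et.
  - apply tOf_some in Et. rewrite f_dom, f_cod, He1, He2, <- k_eq. split; auto. split; auto.
    intro F. destruct (flag_true F) as (s & Es).
    assert (t = fob i s). { apply (proj1 (proj1 Hj)). rewrite Et, <- Es. apply k_eq. }
    subst t. rewrite He4, f_id, Hri1, <- k_eq. reflexivity.
  - destruct (flag c) eqn:F; auto. destruct (flag_true F) as (s & Es).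
    exfalso. apply (tOf_none Et (t := fob i s)). rewrite <- Es. symmetry. apply k_eq.
Qed.

Definition PsiO (c : Ob C) : XOb k := Build_XOb (PsiO_ok c).

Lemma PsiM_ok (mu : Mor C) :
  XMOk (PsiO (dom mu)) (PsiO (cod mu)) mu (option_map (fmor r) (mOf mu)).
Proof.
  unfold XMOk; simpl. split; auto. split; auto. split.
  - intro F. destruct (flag_true F) as (s & Es).
    destruct (proj2 Hk s mu (eq_sym Es)) as (a & Ea).
    apply (flag_of (s := dom a)). rewrite <- Ea, f_dom. reflexivity.
  - unfold rawt.
    destruct (tOf (dom mu)) as [t|] eqn:E1.
    + apply tOf_some in E1.
      destruct (proj2 Hj t mu (eq_sym E1)) as (m & Em).
      rewrite (mOf_of Em). simpl.
      assert (Ed : dom m = t) by (apply (proj1 (proj1 Hj)); rewrite <- f_dom, Em; auto).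
      rewrite (tOf_of (t := cod m)) by (rewrite <- f_cod, Em; reflexivity).
      rewrite f_dom, f_cod, Ed. split; auto. split; auto.
      rewrite km_eq, <- f_comp.
      2:{ rewrite f_cod, f_cod, He1. reflexivity. }
      rewrite <- He3, Ed. rewrite <- Em. apply f_comp. rewrite He2, Ed. reflexivity.
    + destruct (mOf mu) as [m|] eqn:Em; simpl.
      * apply mOf_some in Em. exfalso. apply (tOf_none E1 (t := dom m)).
        rewrite <- Em, f_dom. reflexivity.
      * destruct (tOf (cod mu)); exact I.
Qed.

Definition PsiM (mu : Mor C) : XMor k := Build_XMor (PsiM_ok mu).

Definition PsiF : Functor C (XGCat k).
Proof.
  refine (@Build_Functor C (XGCat k) PsiO PsiM _ _ _ _).
  - reflexivity.
  - reflexivity.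
  - intro c. apply XMor_eq; simpl.
    + rewrite dom_idm; reflexivity.
    + rewrite cod_idm; reflexivity.
    + reflexivity.
    + unfold idXg. simpl. unfold rawt.
      destruct (tOf c) as [t|] eqn:E.
      * apply tOf_some in E. rewrite (mOf_of (t := idm t)). simpl. rewrite f_id. reflexivity.
        rewrite f_id, E. reflexivity.
      * destruct (mOf (idm c)) as [m|] eqn:Em; auto. apply mOf_some in Em.
        exfalso. apply (tOf_none E (t := dom m)). rewrite <- f_dom, Em, dom_idm. reflexivity.
  - intros f g Efg. simpl in *.
    assert (E' : xd (PsiM f) = xs (PsiM g)) by (simpl; rewrite Efg; reflexivity).
    destruct (compX_spec E') as (A1 & A2 & A3 & A4).
    change (@comp (XCat k)) with (@compX _ _ _ k).
    apply XMor_eq.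
    + rewrite A1. simpl. rewrite dom_comp by exact Efg. reflexivity.
    + rewrite A2. simpl. rewrite cod_comp by exact Efg. reflexivity.
    + rewrite A3. reflexivity.
    + rewrite A4. simpl.
      destruct (mOf f) as [f'|] eqn:Ef.
      * apply mOf_some in Ef.
        destruct (proj2 Hj (cod f') g) as (g' & Eg).
        { rewrite <- f_cod, Ef. symmetry; exact Efg. }
        assert (Ec : cod f' = dom g').
        { apply (proj1 (proj1 Hj)). rewrite <- f_cod, <- f_dom, Ef, Eg. exact Efg. }
        rewrite (mOf_of Eg). rewrite (mOf_of (t := comp g' f')).
        simpl. rewrite f_comp; auto.
        rewrite f_comp, Ef, Eg; auto.
      * destruct (mOf (comp g f)) as [h|] eqn:Eh; [|destruct (mOf g); reflexivity].
        apply mOf_some in Eh. exfalso.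
        destruct (proj2 Hj (dom h) f) as (f' & Ef').
        { rewrite <- f_dom, Eh. symmetry. apply dom_comp. exact Efg. }
        exact (mOf_none Ef Ef').
Defined.


Lemma tOf_act (g : G) c : tOf (aob C g c) = option_map (aob T g) (tOf c).
Proof.
  destruct (tOf c) as [t|] eqn:E; simpl.
  - apply tOf_of. apply tOf_some in E. rewrite gf_ob, E. reflexivity.
  - destruct (tOf (aob C g c)) as [t'|] eqn:E'; auto. apply tOf_some in E'.
    exfalso. apply (tOf_none E (t := aob T (@ginv G g) t')).
    rewrite gf_ob, E', inv_act_ob. reflexivity.
Qed.
Lemma mOf_act (g : G) c : mOf (amor C g c) = option_map (amor T g) (mOf c).
Proof.
  destruct (mOf c) as [t|] eqn:E; simpl.
  - apply mOf_of. apply mOf_some in E. rewrite gf_mor, E. reflexivity.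
  - destruct (mOf (amor C g c)) as [t'|] eqn:E'; auto. apply mOf_some in E'.
    exfalso. apply (mOf_none E (t := amor T (@ginv G g) t')).
    rewrite gf_mor, E', inv_act_mor. reflexivity.
Qed.
Lemma flag_act (g : G) c : flag (aob C g c) = flag c.
Proof.
  destruct (flag c) eqn:F.
  - destruct (flag_true F) as (s & Es). apply (flag_of (s := aob S g s)). rewrite gf_ob, Es. auto.
  - destruct (flag (aob C g c)) eqn:F'; auto. destruct (flag_true F') as (s & Es).
    rewrite <- F. symmetry. apply (flag_of (s := aob S (@ginv G g) s)).
    rewrite gf_ob, Es, inv_act_ob. reflexivity.
Qed.

Lemma PsiO_act (g : G) c : PsiO (aob C g c) = actO g (PsiO c).
Proof.
  apply XOb_eq; simpl; auto.
  - unfold rawt, actT. rewrite tOf_act. destruct (tOf c) as [t|]; simpl; auto.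
    rewrite gf_ob, eps_equiv, gf_mor. reflexivity.
  - apply flag_act.
Qed.

Definition PsiG : GFunctor C (XGCat k).
Proof.
  refine {| gf := PsiF |}.
  - intros g c. apply PsiO_act.
  - intros g mu. apply XMor_eq; simpl.
    + rewrite amor_dom. apply PsiO_act.
    + rewrite amor_cod. apply PsiO_act.
    + reflexivity.
    + rewrite mOf_act. destruct (mOf mu); simpl; auto. rewrite gf_mor. reflexivity.
Defined.

Theorem PsiG_str : DwyerStr PsiG.
Proof.
  split; [|split; [|split; [|split]]].
  - intro c. reflexivity.
  - intro mu. reflexivity.
  - intro s. apply XOb_eq; simpl; auto.
    + unfold rawt. rewrite (tOf_of (t := fob i s)) by (symmetry; apply k_eq).
      rewrite Hri1, He4, f_id, <- k_eq. reflexivity.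
    + apply (flag_of (s := s)). reflexivity.
  - intro a. apply XMor_eq; simpl.
    + apply XOb_eq; simpl; rewrite ?f_dom; auto.
      * unfold rawt. rewrite (tOf_of (t := fob i (dom a))) by (symmetry; apply k_eq).
        rewrite Hri1, He4, f_id, <- k_eq. reflexivity.
      * apply (flag_of (s := dom a)). reflexivity.
    + apply XOb_eq; simpl; rewrite ?f_cod; auto.
      * unfold rawt. rewrite (tOf_of (t := fob i (cod a))) by (symmetry; apply k_eq).
        rewrite Hri1, He4, f_id, <- k_eq. reflexivity.
      * apply (flag_of (s := cod a)). reflexivity.
    + reflexivity.
    + rewrite (mOf_of (t := fmor i a)) by (symmetry; apply km_eq). simpl. rewrite Hri2. auto.
  - intros c s m E. simpl in E. unfold rawt in E.
    destruct (tOf c) as [t|] eqn:Et; [|discriminate]. injection E as <- <-.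
    apply tOf_some in Et.
    exists (fmor j (eps t)). simpl. split; [|split; auto].
    rewrite f_cod, He2. exact Et.
    rewrite (mOf_of (t := eps t)) by reflexivity. simpl. rewrite He5. reflexivity.
Qed.

End FromD.

Theorem IsDwyer_Str (G : Group) (S C : GCat G) (k : GFunctor S C) :
  IsDwyer k -> exists Psi, DwyerStr (k := k) Psi.
Proof.
  intros [Hk (T & i & j & r & Hji & Hj & Hi & (Hri1 & Hri2 & eps & He1 & He2 & He3 & He4 & He5))].
  eexists. unshelve eapply PsiG_str; eassumption.
Qed.



Section Phi.
Variables (G : Group) (S C S' C' : GCat G) (k : GFunctor S C) (k' : GFunctor S' C')
  (FS : GFunctor S S') (FC : GFunctor C C').
Hypotheses (Hsq1 : forall s, fob k' (fob FS s) = fob FC (fob k s))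
  (Hsq2 : forall a, fmor k' (fmor FS a) = fmor FC (fmor k a)).

Definition PhiT (t : option (Ob S * Mor C)) : option (Ob S' * Mor C') :=
  option_map (fun p => (fob FS (fst p), fmor FC (snd p))) t.

Lemma PhiO_ok (x : XOb k) : XOk k' (fob FC (xb x)) (PhiT (xt x)) (xz x).
Proof.
  unfold XOk, PhiT. destruct (xt x) as [[s m]|] eqn:E; simpl.
  - destruct (XOk_tied E) as (H1 & H2 & H3). rewrite f_dom, f_cod, H1, H2, Hsq1.
    split; auto. split; auto. intro Hz. rewrite H3 by exact Hz. rewrite f_id. reflexivity.
  - apply XOk_untied; auto.
Qed.
Definition PhiO (x : XOb k) : XOb k' := Build_XOb (PhiO_ok x).

Lemma PhiM_ok (f : XMor k) :
  XMOk (PhiO (xs f)) (PhiO (xd f)) (fmor FC (xmu f)) (option_map (fmor FS) (xg f)).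
Proof.
  pose proof (xmok f) as (F1 & F2 & F3 & F4).
  unfold XMOk; simpl. rewrite f_dom, f_cod, F1, F2. split; auto. split; auto. split; auto.
  unfold PhiT.
  destruct (xt (xs f)) as [[s m]|] eqn:E1, (xt (xd f)) as [[s' m']|] eqn:E2,
    (xg f) as [a|]; simpl in *; try contradiction; auto.
  destruct F4 as (A1 & A2 & A3).
  destruct (XOk_tied E1) as (H1 & H2 & _). destruct (XOk_tied E2) as (H1' & H2' & _).
  rewrite f_dom, f_cod, A1, A2. split; auto. split; auto.
  rewrite Hsq2. rewrite <- f_comp by (rewrite f_cod, A2; congruence).
  rewrite <- f_comp by congruence. rewrite A3. reflexivity.
Qed.
Definition PhiM (f : XMor k) : XMor k' := Build_XMor (PhiM_ok f).

Definition PhiF : Functor (XGCat k) (XGCat k').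
Proof.
  refine (@Build_Functor (XGCat k) (XGCat k') PhiO PhiM _ _ _ _).
  - reflexivity.
  - reflexivity.
  - intro x. apply XMor_eq; simpl; auto. apply f_id.
    unfold idXg; simpl; unfold PhiT. destruct (xt x) as [[s m]|]; simpl; auto. rewrite f_id. auto.
  - intros f g E. simpl in *.
    change (@comp (XCat k)) with (@compX _ _ _ k) in *.
    change (@comp (XCat k')) with (@compX _ _ _ k') in *.
    destruct (compX_spec E) as (A1 & A2 & A3 & A4).
    assert (E' : xd (PhiM f) = xs (PhiM g)) by (simpl; congruence).
    destruct (compX_spec E') as (B1 & B2 & B3 & B4).
    pose proof (xmok f) as (F1 & F2 & _ & F4).
    pose proof (xmok g) as (H1 & H2 & _ & H4).
    apply XMor_eq.
    + rewrite B1. simpl. rewrite A1. reflexivity.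
    + rewrite B2. simpl. rewrite A2. reflexivity.
    + rewrite B3. simpl. rewrite A3. apply f_comp. congruence.
    + rewrite B4. simpl. rewrite A4. rewrite E in F4.
      destruct (xt (xs f)) as [[s m]|], (xt (xs g)) as [[s' m']|],
        (xt (xd g)) as [[s'' m'']|], (xg f) as [a|], (xg g) as [b|];
        simpl in *; try contradiction; auto.
      f_equal. apply f_comp. intuition congruence.
Defined.

Definition PhiG : GFunctor (XGCat k) (XGCat k').
Proof.
  refine {| gf := PhiF |}.
  - intros g x. apply XOb_eq; simpl. apply gf_ob.
    unfold PhiT, actT. destruct (xt x) as [[s m]|]; simpl; auto.
    rewrite !gf_ob, gf_mor. reflexivity. reflexivity.
  - intros g f. apply XMor_eq; simpl.
    + apply XOb_eq; simpl. apply gf_ob.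
      unfold PhiT, actT. destruct (xt (xs f)) as [[s m]|]; simpl; auto.
      rewrite !gf_ob, gf_mor. reflexivity. reflexivity.
    + apply XOb_eq; simpl. apply gf_ob.
      unfold PhiT, actT. destruct (xt (xd f)) as [[s m]|]; simpl; auto.
      rewrite !gf_ob, gf_mor. reflexivity. reflexivity.
    + apply gf_mor.
    + destruct (xg f); simpl; auto. rewrite gf_mor. reflexivity.
Defined.

Lemma Phi_tieO s : PhiO (tieO k s) = tieO k' (fob FS s).
Proof. apply XOb_eq; simpl; unfold PhiT; simpl; rewrite ?f_id, ?Hsq1; reflexivity. Qed.
Lemma Phi_tieM a : PhiM (tieM k a) = tieM k' (fmor FS a).
Proof.
  apply XMor_eq; simpl.
  - rewrite f_dom. apply Phi_tieO.
  - rewrite f_cod. apply Phi_tieO.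
  - symmetry. apply Hsq2.
  - reflexivity.
Qed.

Lemma Phi_P3 (B : GCat G) (A : GFunctor B (XGCat k)) : P3 A -> P3 (compGF PhiG A).
Proof.
  intros H b s' m' E. simpl in E. unfold PhiT in E. fixX.
  destruct (xt (fob A b : XOb k)) as [[s m]|] eqn:E0; [|discriminate].
  simpl in E. injection E as <- <-.
  destruct (H b s m E0) as (mt & C1 & C2 & C3).
  exists mt. split; auto. simpl. fixX. rewrite C2, C3. simpl. rewrite f_id. auto.
Qed.

End Phi.



Section Theta.
Variables (G : Group) (B C S' C' : GCat G) (k2 : GFunctor B C) (k' : GFunctor S' C')
  (F : GFunctor C C') (A : GFunctor B (XGCat k')).
Hypotheses (HA1 : forall b, xb (fob A b : XOb k') = fob F (fob k2 b))
  (HA2 : forall be, xmu (fmor A be : XMor k') = fmor F (fmor k2 be)).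

Definition ThT (x : XOb k2) : option (Ob S' * Mor C') :=
  match xt x with
  | None => None
  | Some (b, m2) => match xt (fob A b : XOb k') with
                    | Some (s, m1) => Some (s, comp (fmor F m2) m1)
                    | None => None end end.
Definition ThZ (x : XOb k2) : bool :=
  match xt x with
  | None => false
  | Some (b, m2) => match xt (fob A b : XOb k') with
                    | Some _ => xz x && xz (fob A b : XOb k')
                    | None => false end end.

Lemma ThO_ok (x : XOb k2) : XOk k' (fob F (xb x)) (ThT x) (ThZ x).
Proof.
  unfold XOk, ThT, ThZ. destruct (xt x) as [[b m2]|] eqn:E; auto.
  destruct (XOk_tied E) as (H1 & H2 & H3).
  destruct (xt (fob A b : XOb k')) as [[s m1]|] eqn:E'; auto.
  destruct (XOk_tied E') as (K1 & K2 & K3).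
  assert (Hc : cod m1 = dom (fmor F m2)) by (rewrite f_dom, H1, K2, HA1; reflexivity).
  rewrite dom_comp, cod_comp, f_cod, H2 by exact Hc.
  split; auto. split; auto.
  intro Hz. apply andb_prop in Hz. destruct Hz as [Z1 Z2].
  rewrite H3, K3 by assumption. rewrite f_id.
  rewrite <- HA1. rewrite <- K2, K3, cod_idm by assumption. apply cid_l. apply cod_idm.
Qed.

Definition ThO (x : XOb k2) : XOb k' := Build_XOb (ThO_ok x).

Definition ThG (f : XMor k2) : option (Mor S') :=
  match xg f with Some be => xg (fmor A be : XMor k') | None => None end.

Lemma A_dom be : xs (fmor A be : XMor k') = fob A (dom be).
Proof. apply (f_dom A). Qed.
Lemma A_cod be : xd (fmor A be : XMor k') = fob A (cod be).
Proof. apply (f_cod A). Qed.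

Lemma ThM_ok (f : XMor k2) :
  XMOk (ThO (xs f)) (ThO (xd f)) (fmor F (xmu f)) (ThG f).
Proof.
  pose proof (xmok f) as (F1 & F2 & F3 & F4).
  unfold XMOk; simpl. rewrite f_dom, f_cod, F1, F2. split; auto. split; auto.
  unfold ThT, ThZ, ThG.
  destruct (xt (xs f)) as [[b m2]|] eqn:E1.
  2:{ destruct (xg f); [contradiction|]. split; auto.
      intro Z. destruct (xt (xd f)) as [[b' m2']|] eqn:E2; [|discriminate].
      destruct (xt (fob A b' : XOb k')); [|discriminate].
      apply andb_prop in Z. destruct Z as [Z _]. specialize (F3 Z).
      rewrite (XOk_untied E1) in F3. discriminate. }
  destruct (xt (xd f)) as [[b' m2']|] eqn:E2; [|destruct (xg f); contradiction].
  destruct (xg f) as [be|] eqn:Eg; [|contradiction].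
  destruct F4 as (B1 & B2 & B3).
  pose proof (xmok (fmor A be : XMor k')) as (G1 & G2 & G3 & G4).
  fixX. rewrite A_dom, B1 in G1, G3, G4. rewrite A_cod, B2 in G2, G3, G4.
  destruct (XOk_tied E1) as (H1 & H2 & _). destruct (XOk_tied E2) as (H1' & H2' & _).
  destruct (xt (fob A b : XOb k')) as [[s m1]|] eqn:E3.
  - destruct (xt (fob A b' : XOb k')) as [[s' m1']|] eqn:E4;
      [|destruct (xg (fmor A be : XMor k')); contradiction].
    destruct (xg (fmor A be : XMor k')) as [ga|] eqn:Ega; [|contradiction].
    destruct G4 as (C1 & C2 & C3).
    destruct (XOk_tied E3) as (K1 & K2 & _). destruct (XOk_tied E4) as (K1' & K2' & _).
    split.
    + intro Z. apply andb_prop in Z. destruct Z as [Z1 Z2].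
      rewrite F3, G3 by assumption. reflexivity.
    + split; auto. split; auto.
      rewrite HA2 in C3.
      rewrite <- comp_assoc.
      2:{ rewrite f_cod, C2. congruence. }
      2:{ rewrite K2', HA1, f_dom, H1'. reflexivity. }
      rewrite C3.
      rewrite comp_assoc.
      2:{ rewrite K2, HA1, !f_dom, B1. reflexivity. }
      2:{ rewrite !f_cod, !f_dom, H1', B2. reflexivity. }
      rewrite <- f_comp by (rewrite f_cod, B2; congruence).
      rewrite B3. rewrite f_comp by congruence.
      rewrite comp_assoc. reflexivity.
      rewrite K2, HA1, !f_dom, H1. reflexivity.
      rewrite !f_cod, !f_dom. congruence.
  - split.
    + intro Z. destruct (xt (fob A b' : XOb k')) as [[s' m1']|] eqn:E4; [|discriminate].
      apply andb_prop in Z. destruct Z as [_ Z2]. specialize (G3 Z2).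
      rewrite (XOk_untied E3) in G3. discriminate.
    + destruct (xg (fmor A be : XMor k')); [contradiction|].
      destruct (xt (fob A b' : XOb k')) as [[s' m1']|]; exact I.
Qed.

Definition ThM (f : XMor k2) : XMor k' := Build_XMor (ThM_ok f).


Definition ThF : Functor (XGCat k2) (XGCat k').
Proof.
  refine (@Build_Functor (XGCat k2) (XGCat k') ThO ThM _ _ _ _).
  - reflexivity.
  - reflexivity.
  - intro x. apply XMor_eq; simpl; auto. apply f_id.
    unfold ThG; simpl; unfold idXg, ThT. fixX. destruct (xt x) as [[b m2]|] eqn:Ex; simpl; auto.
    rewrite (f_id A). simpl. unfold idXg, ThT. fixX. rewrite Ex.
    destruct (xt (fob A b : XOb k')) as [[s m1]|]; reflexivity.
    unfold ThT. fixX. rewrite Ex. reflexivity.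
  - intros f g E. simpl in *.
    change (@comp (XCat k2)) with (@compX _ _ _ k2) in *.
    change (@comp (XCat k')) with (@compX _ _ _ k') in *.
    destruct (compX_spec E) as (A1 & A2 & A3 & A4).
    assert (E' : xd (ThM f) = xs (ThM g)) by (simpl; congruence).
    destruct (compX_spec E') as (B1 & B2 & B3 & B4).
    pose proof (xmok f) as (F1 & F2 & _ & F4).
    pose proof (xmok g) as (H1 & H2 & _ & H4).
    apply XMor_eq.
    + rewrite B1. simpl. rewrite A1. reflexivity.
    + rewrite B2. simpl. rewrite A2. reflexivity.
    + rewrite B3. simpl. rewrite A3. apply f_comp. congruence.
    + rewrite B4. simpl. unfold ThG. rewrite A4. rewrite E in F4.
      destruct (xt (xs f)) as [[s m]|], (xt (xs g)) as [[s' m']|],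
        (xt (xd g)) as [[s'' m'']|], (xg f) as [a|], (xg g) as [b|];
        simpl in *; try contradiction; auto.
      * assert (Eab : cod a = dom b) by intuition congruence.
        rewrite (f_comp A) by exact Eab.
        assert (Ex : xd (fmor A a : XMor k') = xs (fmor A b : XMor k')).
        { fixX. rewrite A_dom, A_cod, Eab. reflexivity. }
        fixX. destruct (compX_spec Ex) as (_ & _ & _ & X4).
        change (@comp (gc (XGCat k'))) with (@compX _ _ _ k'). rewrite X4. reflexivity.
      * match goal with |- context [ocomp ?x None] => destruct x; reflexivity end.
Defined.

Lemma ThO_act (g : G) x : ThO (actO g x) = actO g (ThO x).
Proof.
  apply XOb_eq; simpl.
  - apply gf_ob.
  - unfold ThT, actT. simpl. destruct (xt x) as [[b m2]|] eqn:E; simpl; auto.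
    rewrite (gf_ob A). simpl. unfold actT. fixX.
    destruct (xt (fob A b : XOb k')) as [[s m1]|] eqn:E'; simpl; auto.
    destruct (XOk_tied E) as (H1 & _). destruct (XOk_tied E') as (K1 & K2 & _).
    rewrite gf_mor. rewrite amor_comp; auto. rewrite f_dom, H1, K2, HA1. reflexivity.
  - unfold ThZ. simpl. unfold actT. destruct (xt x) as [[b m2]|]; simpl; auto.
    rewrite (gf_ob A). simpl. unfold actT. fixX.
    destruct (xt (fob A b : XOb k')) as [[s m1]|]; simpl; auto.
Qed.

Definition ThGF : GFunctor (XGCat k2) (XGCat k').
Proof.
  refine {| gf := ThF |}.
  - intros g x. apply ThO_act.
  - intros g f. apply XMor_eq; simpl.
    + apply ThO_act.
    + apply ThO_act.
    + apply gf_mor.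
    + unfold ThG. simpl. destruct (xg f) as [be|]; simpl; auto.
      rewrite (gf_mor A). reflexivity.
Defined.

Lemma Th_tieO b : ThO (tieO k2 b) = fob A b.
Proof.
  apply XOb_eq; simpl.
  - symmetry. apply HA1.
  - unfold ThT. simpl. fixX. destruct (xt (fob A b : XOb k')) as [[s m1]|] eqn:E; auto.
    f_equal. f_equal. rewrite f_id. apply cid_l.
    destruct (XOk_tied E) as (_ & K2 & _). rewrite K2, HA1. reflexivity.
  - unfold ThZ. simpl. fixX. destruct (xt (fob A b : XOb k')) as [[s m1]|] eqn:E; auto.
    symmetry. apply (XOk_untied E).
Qed.

Lemma Th_tieM be : ThM (tieM k2 be) = fmor A be.
Proof.
  apply XMor_eq; simpl.
  - rewrite Th_tieO. symmetry. apply A_dom.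
  - rewrite Th_tieO. symmetry. apply A_cod.
  - symmetry. apply HA2.
  - reflexivity.
Qed.

Lemma Th_P3 (Psi2 : GFunctor C (XGCat k2)) : DwyerStr Psi2 -> P3 A -> P3 (compGF ThGF Psi2).
Proof.
  intros (D1 & D2 & D3 & D4 & D5) PA c s m E. simpl in E. unfold ThT in E. fixX.
  destruct (xt (fob Psi2 c : XOb k2)) as [[b m2]|] eqn:E1; [|discriminate].
  destruct (xt (fob A b : XOb k')) as [[s0 m1]|] eqn:E2; [|discriminate].
  injection E as <- <-.
  destruct (PA b s0 m1 E2) as (mt1 & C1 & C2 & C3).
  destruct (D5 c b m2 E1) as (mt2 & C1' & C2' & C3').
  rewrite D2 in C2'. subst mt2.
  destruct (XOk_tied E1) as (H1 & H2 & _).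
  assert (Ec : cod (fmor k2 mt1) = dom m2) by (rewrite f_cod, C1, H1; reflexivity).
  exists (comp m2 (fmor k2 mt1)). split.
  { rewrite cod_comp by exact Ec. exact C1'. }
  rewrite (f_comp (compGF ThGF Psi2)) by exact Ec.
  set (X1 := fmor (compGF ThGF Psi2) m2). set (X2 := fmor (compGF ThGF Psi2) (fmor k2 mt1)).
  assert (Ex : xd (X2 : XMor k') = xs (X1 : XMor k')).
  { exact (eq_trans (f_cod (compGF ThGF Psi2) _) (eq_trans (f_equal _ Ec) (eq_sym (f_dom (compGF ThGF Psi2) _)))). }
  change (@comp (gc (XGCat k')) X1 X2) with (compX X1 X2).
  destruct (compX_spec Ex) as (_ & _ & X3 & X4). rewrite X3, X4.
  assert (EX2 : X2 = fmor A mt1). { unfold X2. simpl. fixX. rewrite D4. apply Th_tieM. }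
  assert (EX1m : xmu (X1 : XMor k') = fmor F m2). { unfold X1. simpl. fixX. rewrite D2. reflexivity. }
  assert (EX1g : xg (X1 : XMor k') = Some (idm s0)).
  { unfold X1; simpl; unfold ThG. fixX. rewrite C3'. rewrite (f_id A). simpl. unfold idXg.
    fixX. rewrite E2. reflexivity. }
  rewrite EX2, EX1m, EX1g. fixX. rewrite C2, C3. split; auto. simpl. f_equal. apply cid_l, cod_idm.
Qed.

End Theta.



Lemma tie_P3 (G : Group) (S C : GCat G) (k : GFunctor S C) : P3 (tieG k).
Proof.
  intros b s m E. simpl in E. injection E as <- <-.
  exists (idm b). simpl. split. apply cod_idm. split. apply f_id. reflexivity.
Qed.

Lemma P3_at (G : Group) (S C D : GCat G) (k : GFunctor S C) (Psi : GFunctor D (XGCat k))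
  (B : GCat G) (F : GFunctor B D) (A : GFunctor B (XGCat k)) :
  FCompEq Psi F A -> P3 A ->
  forall b s m, xt (fob Psi (fob F b) : XOb k) = Some (s, m) ->
    exists mt, cod mt = fob F b /\ xmu (fmor Psi mt : XMor k) = m /\
               xg (fmor Psi mt : XMor k) = Some (idm s).
Proof.
  intros [E1 E2] HA b s m E. rewrite E1 in E. destruct (HA b s m E) as (mt & C1 & C2 & C3).
  exists (fmor F mt). rewrite E2. split; auto. rewrite f_cod, C1. reflexivity.
Qed.

Section Comp.
Variables (G : Group) (A B C : GCat G) (k1 : GFunctor A B) (k2 : GFunctor B C).

Theorem dwyer_comp : IsDwyer k1 -> IsDwyer k2 -> IsDwyer (compGF k2 k1).
Proof.
  intros D1 D2.
  destruct (IsDwyer_Str D1) as (Psi1 & H1). destruct (IsDwyer_Str D2) as (Psi2 & H2).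
  set (Ph := PhiG (k := k1) (k' := compGF k2 k1) (FS := idG A) (FC := k2)
                  (fun s => eq_refl) (fun a => eq_refl)).
  set (A1 := compGF Ph Psi1).
  destruct H1 as (E1 & E2 & E3 & E4 & E5).
  assert (HA1 : forall b, xb (fob A1 b : XOb (compGF k2 k1)) = fob (idG C) (fob k2 b)).
  { intro b. simpl. fixX. rewrite E1. reflexivity. }
  assert (HA2 : forall be, xmu (fmor A1 be : XMor (compGF k2 k1)) = fmor (idG C) (fmor k2 be)).
  { intro b. simpl. fixX. rewrite E2. reflexivity. }
  apply (DwyerStr_IsDwyer (Psi := compGF (ThGF HA1 HA2) Psi2)).
  destruct H2 as (F1 & F2 & F3 & F4 & F5).
  split; [|split; [|split; [|split]]].
  - intro c. simpl. fixX. apply F1.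
  - intro c. simpl. fixX. apply F2.
  - intro s. simpl. fixX. rewrite F3. rewrite Th_tieO. unfold A1. simpl. fixX. rewrite E3.
    apply Phi_tieO.
  - intro a. simpl. fixX. rewrite F4. rewrite Th_tieM. unfold A1. simpl. fixX. rewrite E4.
    apply Phi_tieM.
  - apply Th_P3. split; auto. apply Phi_P3. exact E5.
Qed.
End Comp.

Section Closure.
Variables (G : Group) (P : GCat G -> Prop).
Hypothesis HPX : forall (S C : GCat G) (k : GFunctor S C), P S -> P C -> P (XGCat k).
Hypothesis HPFS : forall (D : GCat G) (Q : Ob D -> Prop) (HQ : forall g d, Q d -> Q (aob D g d)),
  P D -> P (FSGCat HQ).

Lemma FEq_id_comp (D X : GCat G) (u : GFunctor D X) (v : GFunctor X D) :
  FEq (idG D) (compGF v u) -> (forall d, fob v (fob u d) = d) /\ (forall m, fmor v (fmor u m) = m).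
Proof. intros [A B]. split; intro; symmetry; [apply A | apply B]. Qed.

Theorem dwyer_pushout (K L C D : GCat G) (j : GFunctor K L) (f : GFunctor K C)
  (k : GFunctor C D) (h : GFunctor L D) :
  P K -> P L -> P C -> IsDwyer j -> IsPushout P j f k h -> IsDwyer k.
Proof.
  intros PK PL PC Dj [PD [Sq1 [Sq2 UP]]].
  destruct (IsDwyer_Str Dj) as (Psij & Hj).
  set (Ph := PhiG (k := j) (k' := k) (FS := f) (FC := h) Sq1 Sq2).
  set (b := compGF Ph Psij).
  destruct Hj as (J1 & J2 & J3 & J4 & J5).
  assert (C1 : forall x, fob (tieG k) (fob f x) = fob b (fob j x)).
  { intro x. simpl. fixX. rewrite J3. symmetry. apply Phi_tieO. }
  assert (C2 : forall m, fmor (tieG k) (fmor f m) = fmor b (fmor j m)).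
  { intro m. simpl. fixX. rewrite J4. symmetry. apply Phi_tieM. }
  destruct (UP (XGCat k) (HPX k PC PD) (tieG k) b C1 C2) as [[Psi [Hk Hh]] _].
  assert (Hpi : FEq (idG D) (compGF (piG k) Psi)).
  { destruct (UP D PD k h Sq1 Sq2) as [_ U].
    apply U.
    - split; intro; reflexivity.
    - split; intro; reflexivity.
    - split; intro x; simpl.
      + rewrite (proj1 Hk). reflexivity.
      + rewrite (proj2 Hk). reflexivity.
    - split; intro x; simpl.
      + rewrite (proj1 Hh). simpl. fixX. rewrite J1. reflexivity.
      + rewrite (proj2 Hh). simpl. fixX. rewrite J2. reflexivity. }
  apply FEq_id_comp in Hpi. destruct Hpi as [Pi1 Pi2].
  set (Q := fun d => (exists c, fob k c = d) \/ (exists l, fob h l = d)).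
  assert (HQ : forall g d, Q d -> Q (aob D g d)).
  { intros g d [[c Ec]|[l El]]; [left; exists (aob C g c) | right; exists (aob L g l)];
      rewrite gf_ob; congruence. }
  assert (Qk : forall c, Q (fob k c)) by (intro c; left; eauto).
  assert (Qh : forall l, Q (fob h l)) by (intro l; right; eauto).
  assert (Surj : forall d, Q d).
  { destruct (UP (FSGCat HQ) (HPFS HQ PD) (corG HQ Qk) (corG HQ Qh)) as [[u [Uk Uh]] _].
    - intro x. apply sig_eq'. simpl. apply Sq1.
    - intro x. apply sig_eq'. simpl. apply Sq2.
    - destruct (UP D PD k h Sq1 Sq2) as [_ U].
      assert (FE : FEq (idG D) (compGF (inclG HQ) u)).
      { apply U.
        - split; intro; reflexivity.
        - split; intro; reflexivity.
        - split; intro x; simpl.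
          + rewrite (proj1 Uk). reflexivity.
          + rewrite (proj2 Uk). reflexivity.
        - split; intro x; simpl.
          + rewrite (proj1 Uh). reflexivity.
          + rewrite (proj2 Uh). reflexivity. }
      intro d. pose proof (proj1 FE d) as Ed. simpl in Ed. rewrite Ed. exact (proj2_sig (fob u d)). }
  apply (DwyerStr_IsDwyer (Psi := Psi)).
  split; [|split; [|split; [|split]]].
  - exact Pi1.
  - exact Pi2.
  - intro s. apply (proj1 Hk).
  - intro a. apply (proj2 Hk).
  - intros d s m E. destruct (Surj d) as [[c <-]|[l <-]].
    + eapply P3_at; [exact Hk | apply tie_P3 | exact E].
    + eapply P3_at; [exact Hh | apply Phi_P3; exact J5 | exact E].
Qed.


Lemma choose_str (S C : GCat G) (k : GFunctor S C) :
  IsDwyer k -> { Psi : GFunctor C (XGCat k) | DwyerStr Psi }.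
Proof. intro H. apply constructive_indefinite_description. apply IsDwyer_Str. exact H. Qed.

Theorem dwyer_coprod (I : Type) (S C : I -> GCat G) (k : forall i, GFunctor (S i) (C i)) :
  (forall i, P (S i)) -> (forall i, P (C i)) -> (forall i, IsDwyer (k i)) ->
  forall (QS QC : GCat G) (iS : forall i, GFunctor (S i) QS)
         (iC : forall i, GFunctor (C i) QC),
    IsCoproduct P iS -> IsCoproduct P iC ->
    forall kappa : GFunctor QS QC,
      (forall i, FCompEq kappa (iS i) (compGF (iC i) (k i))) ->
      IsDwyer kappa.
Proof.
  intros PS PC Dk QS QC iS iC [PQS US] [PQC UC] kappa Hka.
  set (Psis := fun i => proj1_sig (choose_str (Dk i))).
  assert (HPs : forall i, DwyerStr (Psis i)) by (intro i; exact (proj2_sig (choose_str (Dk i)))).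
  assert (Sq1 : forall i s, fob kappa (fob (iS i) s) = fob (iC i) (fob (k i) s))
    by (intros i s; apply (proj1 (Hka i))).
  assert (Sq2 : forall i a, fmor kappa (fmor (iS i) a) = fmor (iC i) (fmor (k i) a))
    by (intros i a; apply (proj2 (Hka i))).
  set (a := fun i => compGF (PhiG (k := k i) (k' := kappa) (FS := iS i) (FC := iC i)
                                  (Sq1 i) (Sq2 i)) (Psis i)).
  destruct (UC (XGCat kappa) (HPX kappa PQS PQC) a) as [[Psi Ha] _].
  assert (Hpi : FEq (idG QC) (compGF (piG kappa) Psi)).
  { destruct (UC QC PQC iC) as [_ U]. apply U.
    - intro i. split; intro; reflexivity.
    - intro i. destruct (HPs i) as (E1 & E2 & _).
      split; intro x; simpl.
      + rewrite (proj1 (Ha i)). simpl. fixX. rewrite E1. reflexivity.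
      + rewrite (proj2 (Ha i)). simpl. fixX. rewrite E2. reflexivity. }
  apply FEq_id_comp in Hpi. destruct Hpi as [Pi1 Pi2].
  assert (Hkt : FEq (compGF Psi kappa) (tieG kappa)).
  { destruct (US (XGCat kappa) (HPX kappa PQS PQC) (fun i => compGF (tieG kappa) (iS i)))
      as [_ U]. apply U.
    - intro i. destruct (HPs i) as (_ & _ & E3 & E4 & _). split; intro x; simpl.
      + rewrite (Sq1 i). rewrite (proj1 (Ha i)). simpl. fixX. rewrite E3. apply Phi_tieO.
      + rewrite (Sq2 i). rewrite (proj2 (Ha i)). simpl. fixX. rewrite E4. apply Phi_tieM.
    - intro i. split; intro; reflexivity. }
  set (Q := fun d => exists i c, fob (iC i) c = d).
  assert (HQ : forall g d, Q d -> Q (aob QC g d)).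
  { intros g d (i & c & Ec). exists i, (aob (C i) g c). rewrite gf_ob; congruence. }
  assert (Qi : forall i c, Q (fob (iC i) c)) by (intros i c; exists i, c; reflexivity).
  assert (Surj : forall d, Q d).
  { destruct (UC (FSGCat HQ) (HPFS HQ PQC) (fun i => corG HQ (Qi i))) as [[u Uu] _].
    destruct (UC QC PQC iC) as [_ U].
    assert (FE : FEq (idG QC) (compGF (inclG HQ) u)).
    { apply U.
      - intro i. split; intro; reflexivity.
      - intro i. split; intro x; simpl.
        + rewrite (proj1 (Uu i)). reflexivity.
        + rewrite (proj2 (Uu i)). reflexivity. }
    intro d. pose proof (proj1 FE d) as Ed. simpl in Ed. rewrite Ed. exact (proj2_sig (fob u d)). }
  apply (DwyerStr_IsDwyer (Psi := Psi)).
  split; [|split; [|split; [|split]]].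
  - exact Pi1.
  - exact Pi2.
  - intro s. apply (proj1 Hkt).
  - intro x. apply (proj2 Hkt).
  - intros d s m E. destruct (Surj d) as (i & c & <-).
    eapply P3_at; [exact (Ha i) | apply Phi_P3; exact (proj2 (proj2 (proj2 (proj2 (HPs i))))) | exact E].
Qed.


Section SeqC.
Variables (C : nat -> GCat G) (k : forall n, GFunctor (C n) (C (S n)))
  (L : GCat G) (lam : forall n, GFunctor (C n) L).
Hypotheses (Dk : forall n, IsDwyer (k n)) (Hlam : forall n, FCompEq (lam (S n)) (k n) (lam n)).

Definition Psis n : GFunctor (C (S n)) (XGCat (k n)) := proj1_sig (choose_str (Dk n)).
Lemma HPs n : DwyerStr (Psis n).
Proof. exact (proj2_sig (choose_str (Dk n))). Qed.

Definition Good n (A : GFunctor (C n) (XGCat (lam 0))) : Prop :=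
  (forall c, xb (fob A c : XOb (lam 0)) = fob (lam n) c) /\
  (forall m, xmu (fmor A m : XMor (lam 0)) = fmor (lam n) m) /\ P3 A.
Arguments Good n A : clear implicits.

Lemma good0 : Good 0 (tieG (lam 0)).
Proof. split; [|split]; [intro; reflexivity | intro; reflexivity | apply tie_P3]. Qed.

Lemma HA1' n A (H : Good n A) : forall b, xb (fob A b : XOb (lam 0)) = fob (lam (S n)) (fob (k n) b).
Proof. intro b. rewrite (proj1 H b). symmetry. apply (proj1 (Hlam n)). Qed.
Lemma HA2' n A (H : Good n A) : forall b, xmu (fmor A b : XMor (lam 0)) = fmor (lam (S n)) (fmor (k n) b).
Proof. intro b. rewrite (proj1 (proj2 H) b). symmetry. apply (proj2 (Hlam n)). Qed.

Definition stepA n A (H : Good n A) : GFunctor (C (S n)) (XGCat (lam 0)) :=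
  compGF (ThGF (F := lam (S n)) (HA1' H) (HA2' H)) (Psis n).

Lemma goodS n A (H : Good n A) : Good (S n) (stepA H).
Proof.
  destruct (HPs n) as (E1 & E2 & E3 & E4 & E5).
  split; [|split].
  - intro c. simpl. fixX. rewrite E1. reflexivity.
  - intro m. simpl. fixX. rewrite E2. reflexivity.
  - apply Th_P3. split; auto. exact (proj2 (proj2 H)).
Qed.

Fixpoint aseq n : { A : GFunctor (C n) (XGCat (lam 0)) | Good n A } :=
  match n as n0 return { A : GFunctor (C n0) (XGCat (lam 0)) | Good n0 A } with
  | 0 => exist _ (tieG (lam 0)) good0
  | S n' => exist _ (stepA (proj2_sig (aseq n'))) (goodS (proj2_sig (aseq n')))
  end.

Lemma aseq_cocone n : FCompEq (proj1_sig (aseq (S n))) (k n) (proj1_sig (aseq n)).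
Proof.
  destruct (HPs n) as (E1 & E2 & E3 & E4 & E5).
  split; intro x; simpl.
  - fixX. rewrite E3. apply Th_tieO.
  - fixX. rewrite E4. apply Th_tieM.
Qed.

End SeqC.

Theorem dwyer_seq (C : nat -> GCat G) (k : forall n, GFunctor (C n) (C (S n))) :
  (forall n, P (C n)) -> (forall n, IsDwyer (k n)) ->
  forall (L : GCat G) (lam : forall n, GFunctor (C n) L),
    IsSeqColim P k lam -> IsDwyer (lam 0).
Proof.
  intros PC Dk L lam [PL [Hlam UL]].
  set (a := fun n => proj1_sig (aseq Dk Hlam n)).
  pose proof (fun n => proj2_sig (aseq Dk Hlam n)) as Ga. fold a in Ga.
  assert (Hc : forall n, FCompEq (a (S n)) (k n) (a n)) by (intro n; apply aseq_cocone).
  destruct (UL (XGCat (lam 0)) (HPX (lam 0) (PC 0) PL) a Hc) as [[Psi Ha] _].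
  assert (Hpi : FEq (idG L) (compGF (piG (lam 0)) Psi)).
  { destruct (UL L PL lam Hlam) as [_ U]. apply U.
    - intro n. split; intro; reflexivity.
    - intro n. destruct (Ga n) as (G1 & G2 & _).
      split; intro x; simpl.
      + rewrite (proj1 (Ha n)). fixX. apply G1.
      + rewrite (proj2 (Ha n)). fixX. apply G2. }
  apply FEq_id_comp in Hpi. destruct Hpi as [Pi1 Pi2].
  set (Q := fun d => exists n c, fob (lam n) c = d).
  assert (HQ : forall g d, Q d -> Q (aob L g d)).
  { intros g d (n & c & Ec). exists n, (aob (C n) g c). rewrite gf_ob; congruence. }
  assert (Qi : forall n c, Q (fob (lam n) c)) by (intros n c; exists n, c; reflexivity).
  assert (Surj : forall d, Q d).
  { destruct (UL (FSGCat HQ) (HPFS HQ PL) (fun n => corG HQ (Qi n))) as [[u Uu] _].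
    - intro n. split; intro x; apply sig_eq'; simpl; [apply (proj1 (Hlam n)) | apply (proj2 (Hlam n))].
    - destruct (UL L PL lam Hlam) as [_ U].
      assert (FE : FEq (idG L) (compGF (inclG HQ) u)).
      { apply U.
        - intro n. split; intro; reflexivity.
        - intro n. split; intro x; simpl.
          + rewrite (proj1 (Uu n)). reflexivity.
          + rewrite (proj2 (Uu n)). reflexivity. }
      intro d. pose proof (proj1 FE d) as Ed. simpl in Ed. rewrite Ed. exact (proj2_sig (fob u d)). }
  apply (DwyerStr_IsDwyer (Psi := Psi)).
  split; [|split; [|split; [|split]]].
  - exact Pi1.
  - exact Pi2.
  - intro s. apply (proj1 (Ha 0)).
  - intro x. apply (proj2 (Ha 0)).
  - intros d s m E. destruct (Surj d) as (n & c & <-).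
    eapply P3_at; [exact (Ha n) | exact (proj2 (proj2 (Ga n))) | exact E].
Qed.

End Closure.


Lemma closure_all (G : Group) (P : GCat G -> Prop)
  (HPX : forall (S C : GCat G) (k : GFunctor S C), P S -> P C -> P (XGCat k))
  (HPFS : forall (D : GCat G) (Q : Ob D -> Prop) (HQ : forall g d, Q d -> Q (aob D g d)),
     P D -> P (FSGCat HQ)) :
  DwyerClosureProps P.
Proof.
  split; [|split; [|split]].
  - intros A B C k1 k2 _ _ _ D1 D2. apply dwyer_comp; auto.
  - intros I S C k PS PC Dk QS QC iS iC H1 H2 kappa Hk.
    exact (dwyer_coprod HPX HPFS PS PC Dk H1 H2 Hk).
  - intros K L C D j f k h PK PL PC Dj Hp. exact (dwyer_pushout HPX HPFS PK PL PC Dj Hp).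
  - intros C k PC Dk L lam Hs. exact (dwyer_seq HPX HPFS PC Dk Hs).
Qed.

Theorem lemma4p4 (G : Group) :
  DwyerClosureProps (@inGCat G) /\ DwyerClosureProps (@inGPos G).
Proof.
  split; apply closure_all.
  - intros; exact I.
  - intros; exact I.
  - intros S C k PS PC. apply X_poset; auto.
  - intros D Q HQ PD. apply FS_poset; auto.
Qed.
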